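(* Let $*\in\{s,w\}$. 1. For every matroid $M$ (an element of $\operatorname{Gr}(r,\mathbb{K}^n)$), the realization spaces $\operatorname{Real}^*_{\triangle}(M)$ and $\operatorname{Real}_{\mathcal{T}\triangle}(M)$ are contractible. These are taken with respect to the unique morphisms $\triangle\to\mathbb{K}$ and $\mathcal{T}\triangle\to\mathbb{K}$. 2. For every oriented matroid $M$ (an element of $\operatorname{Gr}(r,\mathbb{S}^n)$), $\operatorname{Real}_{\mathcal{T}\mathbb{R}}(M)$ is contractible. This is taken with respect to $\operatorname{ph}:\mathcal{T}\mathbb{R}\to\mathbb{S}$. 3. For every $M\in\operatorname{Gr}^*(r,\Phi^n)$, $\operatorname{Real}^*_{\mathcal{T}\mathbb{C}}(M)$ is contractible. This is taken with respect to $\operatorname{ph}:\mathcal{T}\mathbb{C}\to\Phi$. In particular all these realization spaces are nonempty.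
   Context: Hyperfields. A hyperfield $(F,\odot,\boxplus,1,0)$ has the following data and axioms. - $\odot$ is a commutative multiplication and $\boxplus$ is a hyperaddition assigning to each $x,y$ a nonempty subset $x\boxplus y\subseteq F$ (extended to subsets by unions). - $\boxplus$ is commutative and associative, and $x\boxplus 0=\{x\}$. - Each $x$ has a unique $-x$ with $0\in x\boxplus(-x)$, and $x\in y\boxplus z \iff z\in x\boxplus(-y)$. - $(F\setminus\{0\},\odot,1)$ is an abelian group $F^\times$, $0\odot x=0$, and $x\odot(y\boxplus z)=(x\odot y)\boxplus(x\odot z)$. A homomorphism (morphism) $h$ satisfies $h(0)=0$, $h(1)=1$, $h(xy)=h(x)h(y)$ and $h(x\boxplus y)\subseteq h(x)\boxplus h(y)$. Hyperfields, all with multiplication that of $\mathbb{C}$. - $\mathbb{K}=\{0,1\}$ with $1\boxplus1=\{0,1\}$. - $\mathbb{S}=\{-1,0,1\}$ with $1\boxplus1=\{1\}$, $(-1)\boxplus(-1)=\{-1\}$, $1\boxplus(-1)=\{-1,0,1\}$. - $\Phi=S^1\cup\{0\}$ with $a\boxplus a=\{a\}$ and $a\boxplus(-a)=S^1\cup\{0\}$; for $b\ne\pm a$, $a\boxplus b$ is the shortest closed arc joining $a,b$. - $\triangle=\mathbb{R}_{\ge0}$ with $a\boxplus b=[|a-b|,a+b]$. - $\mathcal{T}\triangle=\mathbb{R}_{\ge0}$ with $a\boxplus b=\{\max(a,b)\}$ if $a\ne b$, and $a\boxplus a=[0,a]$. - $\mathcal{T}\mathbb{R}=\mathbb{R}$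 with $a\boxplus b=\{a\}$ if $|a|>|b|$ or $a=b$, and $a\boxplus(-a)=[-|a|,|a|]$. - $\mathcal{T}\mathbb{C}=\mathbb{C}$ with: $a\boxplus b=\{a\}$ if $|a|>|b|$; $a\boxplus(-a)=\{x:|x|\le|a|\}$; if $|a|=|b|$ and $b\ne-a$, $a\boxplus b$ is the shortest closed arc from $a$ to $b$ on the circle of radius $|a|$. $\triangle,\mathcal{T}\triangle,\mathcal{T}\mathbb{R},\mathcal{T}\mathbb{C}$ are topologized with the Euclidean topology. Equivalently, the resulting realization spaces are the same if one uses the 0-coarse topology, whose open sets are the whole space and the Euclidean-open sets not containing $0$. $\operatorname{ph}(x)=x/|x|$ for $x\ne0$, and $\operatorname{ph}(0)=0$. The unique morphism to $\mathbb{K}$ sends $0\mapsto0$ and nonzero elements to $1$. Grassmannians. A strong Grassmann–Plücker (GP) function of rank $r$ on $E=\{1,\dots,n\}$ is a function $\varphi:E^r\to F$ with the following properties. - $\varphi$ is not identically $0$. - $\varphi$ is alternating. - For all $(i_1,\dots,i_{r+1})\in E^{r+1}$ and $(j_1,\dots,j_{r-1})\in E^{r-1}$: $$0\in\boxplus_{k=1}^{r+1}(-1)^k\varphi(i_1,\dots,\widehat{i_k},\dots,i_{r+1})\odot\varphi(i_k,j_1,\dots,j_{r-1}).$$ A weak GP function is a function $\varphi:E^r\to F$ with the following properties. - $\varphi$ is nonzero and alternating. - Its support is the set of bases of a matroid. - The relation holds whenever $|\{i\}\setminus\{j\}|=3$. $\operatorname{Gr}^s$ and $\operatorname{Gr}^w$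 are the sets of classes modulo $\varphi\sim\alpha\varphi$, $\alpha\in F^\times$. For $\mathbb{K},\mathbb{S},\mathcal{T}\mathbb{R},\mathcal{T}\triangle$ strong and weak coincide, and one writes $\operatorname{Gr}$ and $\operatorname{Real}$. The topology is the subspace topology of $(F^{E^r}\setminus\{0\})/F^\times$, which carries the product and quotient topologies. Realization spaces. For a morphism $f:F\to F'$ and $M\in\operatorname{Gr}^*(r,F'^n)$, $\operatorname{Real}^*_F(M)$ is the preimage of $M$ under $[\varphi]\mapsto[f\circ\varphi]$, with the subspace topology of $\operatorname{Gr}^*(r,F^n)$. *)

(* Defs.v *)
From Stdlib Require Import Reals List Arith.
Import ListNotations.
Open Scope R_scope.

Definition C := (R * R)%type.
Definition c0 : C := (0, 0).
Definition c1 : C := (1, 0).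
Definition cadd (z w : C) : C := (fst z + fst w, snd z + snd w).
Definition cneg (z : C) : C := (- fst z, - snd z).
Definition csub (z w : C) : C := cadd z (cneg w).
Definition cmul (z w : C) : C :=
  (fst z * fst w - snd z * snd w, fst z * snd w + snd z * fst w).
Definition cscale (s : R) (z : C) : C := (s * fst z, s * snd z).
Definition cnorm (z : C) : R := sqrt (fst z ^ 2 + snd z ^ 2).

Definition Ceq_dec (z w : C) : {z = w} + {z <> w}.
Proof. decide equality; apply Req_EM_T. Defined.

Definition ph (z : C) : C :=
  if Req_EM_T (cnorm z) 0 then c0 else cscale (/ cnorm z) z.

(** the unique morphism to the Krasner hyperfield *)
Definition toK (z : C) : C := if Ceq_dec z c0 then c0 else c1.

(** * Hyperfields embedded in the complex numbers: carrier subset, hyperaddition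
    ([hadd x y z] means z ∈ x ⊞ y) and hyperfield negation.
    Multiplication is that of C, 0 = c0, 1 = c1. *)
Record hyperfield := mkHF {
  hdom : C -> Prop;
  hadd : C -> C -> C -> Prop;
  hneg : C -> C }.

(** z lies on the shortest closed arc from a to b on the circle of radius |a|
    (used only when |a| = |b| and b <> -a) *)
Definition on_arc (a b z : C) : Prop :=
  exists s t, 0 <= s /\ 0 <= t /\ (s <> 0 \/ t <> 0) /\
    z = cscale (cnorm a) (ph (cadd (cscale s a) (cscale t b))).

Definition HK : hyperfield := mkHF
  (fun z => z = c0 \/ z = c1)
  (fun x y z => (x = c0 /\ z = y) \/ (y = c0 /\ z = x) \/
                (x = c1 /\ y = c1 /\ (z = c0 \/ z = c1)))
  (fun z => z).

Definition S_dom (z : C) : Prop := z = c0 \/ z = c1 \/ z = cneg c1.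
Definition HS : hyperfield := mkHF
  S_dom
  (fun x y z => (x = c0 /\ z = y) \/ (y = c0 /\ z = x) \/
                (x <> c0 /\ y = x /\ z = x) \/
                (x <> c0 /\ y = cneg x /\ S_dom z))
  cneg.

Definition Phi_dom (z : C) : Prop := z = c0 \/ cnorm z = 1.
Definition HPhi : hyperfield := mkHF
  Phi_dom
  (fun x y z => (x = c0 /\ z = y) \/ (y = c0 /\ z = x) \/
                (x <> c0 /\ y = cneg x /\ Phi_dom z) \/
                (x <> c0 /\ y <> c0 /\ y <> cneg x /\ on_arc x y z))
  cneg.

Definition Rnn_dom (z : C) : Prop := snd z = 0 /\ 0 <= fst z.

Definition Htri : hyperfield := mkHF
  Rnn_dom
  (fun x y z => Rnn_dom z /\ Rabs (fst x - fst y) <= fst z <= fst x + fst y)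
  (fun z => z).

Definition HTtri : hyperfield := mkHF
  Rnn_dom
  (fun x y z => (fst x <> fst y /\ z = (Rmax (fst x) (fst y), 0)) \/
                (x = y /\ Rnn_dom z /\ fst z <= fst x))
  (fun z => z).

Definition HTR : hyperfield := mkHF
  (fun z => snd z = 0)
  (fun x y z => (Rabs (fst x) > Rabs (fst y) /\ z = x) \/
                (Rabs (fst y) > Rabs (fst x) /\ z = y) \/
                (x = y /\ z = x) \/
                (y = cneg x /\ snd z = 0 /\ Rabs (fst z) <= Rabs (fst x)))
  cneg.

Definition HTC : hyperfield := mkHF
  (fun _ => True)
  (fun x y z => (cnorm x > cnorm y /\ z = x) \/
                (cnorm y > cnorm x /\ z = y) \/
                (y = cneg x /\ cnorm z <= cnorm x) \/
                (cnorm x = cnorm y /\ y <> cneg x /\ on_arc x y z))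
  cneg.

Fixpoint hsum (F : hyperfield) (l : list C) (z : C) : Prop :=
  match l with
  | nil => z = c0
  | a :: l' => exists y, hsum F l' y /\ hadd F a y z
  end.

(** * Functions E^r -> F, E = {0,...,n-1}.
    A function E^r -> F is encoded as a map [list nat -> C] that vanishes
    off the valid tuples (length r, entries < n). *)
Definition valid (n r : nat) (l : list nat) : Prop :=
  length l = r /\ Forall (fun i => (i < n)%nat) l.

Definition Ffun (F : hyperfield) (n r : nat) (phi : list nat -> C) : Prop :=
  (forall l, hdom F (phi l)) /\ (forall l, ~ valid n r l -> phi l = c0).

Definition Adom (F : hyperfield) (n r : nat) (phi : list nat -> C) : Prop :=
  Ffun F n r phi /\ exists l, valid n r l /\ phi l <> c0.

Definition swap_at (i j : nat) (l : list nat) : list nat :=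
  map (fun k => if Nat.eqb k i then nth j l 0%nat
                else if Nat.eqb k j then nth i l 0%nat else nth k l 0%nat)
      (seq 0 (length l)).

Definition alternating (F : hyperfield) (n r : nat) (phi : list nat -> C) : Prop :=
  (forall l, valid n r l -> ~ NoDup l -> phi l = c0) /\
  (forall l i j, valid n r l -> (i < j)%nat -> (j < r)%nat ->
     phi (swap_at i j l) = hneg F (phi l)).

Definition remove_at (k : nat) (l : list nat) : list nat :=
  firstn k l ++ skipn (S k) l.

(** the terms (-1)^k φ(i_1..î_k..i_{r+1}) φ(i_k,j_1..j_{r-1}), k = 1..r+1
    (0-based index k here, sign (-1)^(k+1)) *)
Definition gp_terms (F : hyperfield) (r : nat) (phi : list nat -> C)
    (i j : list nat) : list C :=
  map (fun k => cmul (Nat.iter (S k) (hneg F) c1)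
                     (cmul (phi (remove_at k i)) (phi (nth k i 0%nat :: j))))
      (seq 0 (S r)).

Definition matroid_support (n r : nat) (phi : list nat -> C) : Prop :=
  forall l1 l2, valid n r l1 -> valid n r l2 -> phi l1 <> c0 -> phi l2 <> c0 ->
    forall x, In x l1 -> ~ In x l2 ->
      exists y, In y l2 /\ ~ In y l1 /\
        exists l3, valid n r l3 /\ phi l3 <> c0 /\
          forall z, In z l3 <-> ((In z l1 /\ z <> x) \/ z = y).

Definition card_diff (i j : list nat) : nat :=
  length (nodup Nat.eq_dec (filter (fun x => negb (existsb (Nat.eqb x) j)) i)).

Inductive GPkind := Strong | Weak.

Definition GP (F : hyperfield) (k : GPkind) (n r : nat) (phi : list nat -> C) : Prop :=
  match k with
  | Strong => Adom F n r phi /\ alternating F n r phi /\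
      forall i j, valid n (S r) i -> valid n (r - 1) j ->
        hsum F (gp_terms F r phi i j) c0
  | Weak => Adom F n r phi /\ alternating F n r phi /\ matroid_support n r phi /\
      forall i j, valid n (S r) i -> valid n (r - 1) j -> card_diff i j = 3%nat ->
        hsum F (gp_terms F r phi i j) c0
  end.

(** points of the projective space: classes modulo F^× *)
Definition Pt := (list nat -> C) -> Prop.

Definition cls (F : hyperfield) (phi : list nat -> C) : Pt :=
  fun psi => exists a, hdom F a /\ a <> c0 /\ psi = (fun l => cmul a (phi l)).

Definition Gr (F : hyperfield) (k : GPkind) (n r : nat) (c : Pt) : Prop :=
  exists phi, GP F k n r phi /\ c = cls F phi.

Definition Real (f : C -> C) (F F' : hyperfield) (k : GPkind) (n r : nat)
    (M : Pt) (c : Pt) : Prop :=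
  exists phi, GP F k n r phi /\ c = cls F phi /\ cls F' (fun l => f (phi l)) = M.

(** (relatively) open subsets of F^{E^r} \ {0} (product of Euclidean topologies) *)
Definition fopen (F : hyperfield) (n r : nat) (U : (list nat -> C) -> Prop) : Prop :=
  forall phi, Adom F n r phi -> U phi ->
    exists eps, eps > 0 /\ forall psi, Adom F n r psi ->
      (forall l, valid n r l -> cnorm (csub (phi l) (psi l)) < eps) -> U psi.

(** quotient topology on (F^{E^r} \ {0}) / F^× *)
Definition qopen (F : hyperfield) (n r : nat) (V : Pt -> Prop) : Prop :=
  fopen F n r (fun phi => V (cls F phi)).

(** S (with the subspace topology of [op]) is contractible: there is a
    continuous H : S × [0,1] -> S with H(-,0) = id and H(-,1) constant. *)
Definition contractible {T : Type} (op : (T -> Prop) -> Prop) (S : T -> Prop) : Prop :=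
  exists x0, S x0 /\ exists H : T -> R -> T,
    (forall x t, S x -> 0 <= t <= 1 -> S (H x t)) /\
    (forall x, S x -> H x 0 = x) /\
    (forall x, S x -> H x 1 = x0) /\
    (forall V, op V -> forall x t, S x -> 0 <= t <= 1 -> V (H x t) ->
       exists U, op U /\ U x /\ exists eps, eps > 0 /\
         forall y s, S y -> U y -> 0 <= s <= 1 -> Rabs (s - t) < eps -> V (H y s)).

(* Main.v *)
Require Import Defs.
From Stdlib Require Import Reals List Arith Lra Lia.
From Stdlib Require Import FunctionalExtensionality PropExtensionality ListDec.
From Coquelicot Require Complex.
Import ListNotations.
Import Defs.
Set Bullet Behavior "Strict Subproofs".
Open Scope R_scope.

Lemma Ceq (a b : C) : fst a = fst b -> snd a = snd b -> a = b.
Proof. destruct a, b; simpl; intros; subst; reflexivity. Qed.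

Lemma cnorm_ge0 z : 0 <= cnorm z.
Proof. apply sqrt_pos. Qed.

Lemma cnorm_mul a b : cnorm (cmul a b) = cnorm a * cnorm b.
Proof. exact (Complex.Cmod_mult a b). Qed.

Lemma cnorm_eq0 z : cnorm z = 0 -> z = c0.
Proof. intro H. exact (Complex.Cmod_eq_0 z H). Qed.

Lemma cnorm_c0 : cnorm c0 = 0.
Proof. exact Complex.Cmod_0. Qed.

Lemma cnorm_pos z : z <> c0 -> 0 < cnorm z.
Proof. intro H. destruct (cnorm_ge0 z) as [h|h]; auto. exfalso; apply H, cnorm_eq0; auto. Qed.

Lemma cnorm_triangle a b : cnorm (cadd a b) <= cnorm a + cnorm b.
Proof. exact (Complex.Cmod_triangle a b). Qed.

Lemma cnorm_neg z : cnorm (cneg z) = cnorm z.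
Proof. unfold cnorm, cneg; simpl. f_equal; ring. Qed.

Lemma cnorm_scale s z : 0 <= s -> cnorm (cscale s z) = s * cnorm z.
Proof.
  intro Hs. destruct z as [x y]. cbv [cnorm cscale fst snd].
  replace ((s * x) ^ 2 + (s * y) ^ 2) with (s² * (x ^ 2 + y ^ 2)) by (unfold Rsqr; ring).
  rewrite sqrt_mult_alt. 2: apply Rle_0_sqr. rewrite sqrt_Rsqr; auto.
Qed.

Lemma cnorm_real x : cnorm (x, 0) = Rabs x.
Proof. cbv [cnorm fst snd]. replace (x ^ 2 + 0 ^ 2) with (Rsqr x) by (unfold Rsqr; ring).
  apply sqrt_Rsqr_abs. Qed.

Lemma cnorm_c1 : cnorm c1 = 1.
Proof. unfold c1. rewrite cnorm_real. apply Rabs_R1. Qed.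

Lemma cmul_c1 z : cmul c1 z = z.
Proof. destruct z; unfold cmul, c1; simpl; apply Ceq; simpl; ring. Qed.

Lemma cmul_comm a b : cmul a b = cmul b a.
Proof. apply Ceq; unfold cmul; simpl; ring. Qed.

Lemma cmul_assoc a b c : cmul a (cmul b c) = cmul (cmul a b) c.
Proof. apply Ceq; unfold cmul; simpl; ring. Qed.

Lemma cmul_c0 z : cmul c0 z = c0.
Proof. apply Ceq; unfold cmul, c0; simpl; ring. Qed.

Lemma cmul_eq0 a b : cmul a b = c0 -> a = c0 \/ b = c0.
Proof.
  intro H. assert (cnorm a * cnorm b = 0) by (rewrite <- cnorm_mul, H; apply cnorm_c0).
  destruct (Rmult_integral _ _ H0); [left|right]; apply cnorm_eq0; auto.
Qed.

Lemma cmul_neq0 a b : a <> c0 -> b <> c0 -> cmul a b <> c0.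
Proof. intros Ha Hb H; destruct (cmul_eq0 _ _ H); auto. Qed.

Lemma c1_neq0 : c1 <> c0.
Proof. unfold c1, c0; intro H; inversion H; lra. Qed.

Lemma cneg_c0 : cneg c0 = c0.
Proof. apply Ceq; unfold cneg, c0; simpl; ring. Qed.

Lemma cneg_cneg z : cneg (cneg z) = z.
Proof. apply Ceq; unfold cneg; simpl; ring. Qed.

Lemma cmul_cneg a b : cmul (cneg a) b = cneg (cmul a b).
Proof. apply Ceq; unfold cmul, cneg; simpl; ring. Qed.

Lemma cscale_mul u v a b : cscale (u * v) (cmul a b) = cmul (cscale u a) (cscale v b).
Proof. apply Ceq; unfold cmul, cscale; simpl; ring. Qed.

Lemma cscale_cscale u v a : cscale u (cscale v a) = cscale (u * v) a.
Proof. apply Ceq; unfold cscale; simpl; ring. Qed.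

Lemma cscale_1 a : cscale 1 a = a.
Proof. apply Ceq; unfold cscale; simpl; ring. Qed.

Lemma cscale_neg u a : cscale u (cneg a) = cneg (cscale u a).
Proof. apply Ceq; unfold cscale, cneg; simpl; ring. Qed.

Lemma cscale_eq0 u a : u <> 0 -> a <> c0 -> cscale u a <> c0.
Proof. intros Hu Ha H. apply Ha. unfold cscale, c0 in *. destruct a as [x y]; simpl in *.
  assert (E1 : u * x = 0) by (change (fst (u*x, u*y) = fst (0,0)); rewrite H; reflexivity).
  assert (E2 : u * y = 0) by (change (snd (u*x, u*y) = snd (0,0)); rewrite H; reflexivity).
  apply Ceq; simpl; [destruct (Rmult_integral _ _ E1)|destruct (Rmult_integral _ _ E2)]; lra. Qed.

Lemma csub_scale_split A B w z :
  csub (cscale A w) (cscale B z) = cadd (cscale (A - B) w) (cscale B (csub w z)).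
Proof. apply Ceq; unfold csub, cadd, cneg, cscale; simpl; ring. Qed.

Lemma cnorm_sub_rev w z : Rabs (cnorm w - cnorm z) <= cnorm (csub w z).
Proof.
  assert (H1 : cnorm w <= cnorm (csub w z) + cnorm z).
  { replace w with (cadd (csub w z) z) at 1 by (apply Ceq; unfold cadd, csub, cneg; simpl; ring).
    apply cnorm_triangle. }
  assert (H2 : cnorm z <= cnorm (csub w z) + cnorm w).
  { replace z with (cadd (cneg (csub w z)) w) at 1 by (apply Ceq; unfold cadd, csub, cneg; simpl; ring).
    rewrite <- (cnorm_neg (csub w z)). apply cnorm_triangle. }
  apply Rabs_le; lra.
Qed.

(** * The power maps *)
Definition hp (p : R) (z : C) : C :=
  if Ceq_dec z c0 then c0 else cscale (Rpower (cnorm z) (p - 1)) z.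

Lemma hp_c0 p : hp p c0 = c0.
Proof. unfold hp; destruct (Ceq_dec c0 c0); congruence. Qed.

Lemma hp_nz p z : z <> c0 -> hp p z = cscale (Rpower (cnorm z) (p - 1)) z.
Proof. intro H; unfold hp; destruct (Ceq_dec z c0); congruence. Qed.

Lemma Rpower_pos x y : 0 < Rpower x y.
Proof. unfold Rpower; apply exp_pos. Qed.

Lemma hp_eq0 p z : hp p z = c0 -> z = c0.
Proof. intro H. destruct (Ceq_dec z c0); auto. rewrite hp_nz in H; auto.
  exfalso; eapply cscale_eq0; [|exact n|exact H]. generalize (Rpower_pos (cnorm z) (p-1)); lra. Qed.

Lemma hp_neq0 p z : z <> c0 -> hp p z <> c0.
Proof. intros H H'; apply H; eapply hp_eq0; eauto. Qed.

Lemma Rpower_m1 x p : 0 < x -> Rpower x (p - 1) * x = Rpower x p.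
Proof. intro Hx. rewrite <- (Rpower_1 x) at 2 by auto. rewrite <- Rpower_plus. f_equal; ring. Qed.

Lemma cnorm_hp p z : z <> c0 -> cnorm (hp p z) = Rpower (cnorm z) p.
Proof. intro H. rewrite hp_nz by auto. rewrite cnorm_scale.
  - apply Rpower_m1, cnorm_pos; auto.
  - left; apply Rpower_pos. Qed.

Lemma Rpower_base1 y : Rpower 1 y = 1.
Proof. unfold Rpower. rewrite ln_1, Rmult_0_r. apply exp_0. Qed.

Lemma hp_c1 p : hp p c1 = c1.
Proof. rewrite hp_nz by apply c1_neq0. rewrite cnorm_c1, Rpower_base1. apply cscale_1. Qed.

Lemma hp_mul p a b : hp p (cmul a b) = cmul (hp p a) (hp p b).
Proof.
  destruct (Ceq_dec a c0) as [Ha|Ha]. { subst; rewrite cmul_c0, hp_c0, cmul_c0; auto. }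
  destruct (Ceq_dec b c0) as [Hb|Hb]. { subst; rewrite cmul_comm, cmul_c0, hp_c0, cmul_comm, cmul_c0; auto. }
  rewrite !hp_nz by (auto; apply cmul_neq0; auto).
  rewrite cnorm_mul, <- Rpower_mult_distr by (apply cnorm_pos; auto).
  apply cscale_mul.
Qed.

Lemma cneg_eq0 z : cneg z = c0 -> z = c0.
Proof. intro H. rewrite <- (cneg_cneg z), H. apply cneg_c0. Qed.

Lemma hp_neg p z : hp p (cneg z) = cneg (hp p z).
Proof.
  destruct (Ceq_dec z c0) as [Hz|Hz]. { subst; rewrite cneg_c0, hp_c0, cneg_c0; auto. }
  rewrite !hp_nz; auto. 2:{ intro H; apply Hz, cneg_eq0; auto. }
  rewrite cnorm_neg. apply cscale_neg.
Qed.

Lemma hp_1 z : hp 1 z = z.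
Proof.
  destruct (Ceq_dec z c0) as [Hz|Hz]. { subst; apply hp_c0. }
  rewrite hp_nz by auto. replace (1 - 1) with 0 by ring.
  rewrite Rpower_O by (apply cnorm_pos; auto). apply cscale_1.
Qed.

Lemma hp_0 z : hp 0 z = ph z.
Proof.
  unfold ph. destruct (Req_EM_T (cnorm z) 0) as [H|H].
  { rewrite (cnorm_eq0 _ H). apply hp_c0. }
  assert (Hz : z <> c0) by (intro; subst; apply H, cnorm_c0).
  rewrite hp_nz by auto. f_equal. replace (0 - 1) with (- (1)) by ring.
  rewrite Rpower_Ropp, Rpower_1; auto. apply cnorm_pos; auto.
Qed.

Lemma ph_nz z : z <> c0 -> ph z = cscale (/ cnorm z) z.
Proof. intro Hz. unfold ph. destruct (Req_EM_T (cnorm z) 0) as [H|H]; auto.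
  exfalso; apply Hz, cnorm_eq0; auto. Qed.

Lemma ph_c0 : ph c0 = c0.
Proof. unfold ph. destruct (Req_EM_T (cnorm c0) 0) as [H|H]; auto. exfalso; apply H, cnorm_c0. Qed.

Lemma ph_scale c z : 0 < c -> ph (cscale c z) = ph z.
Proof.
  intro Hc. destruct (Ceq_dec z c0) as [Hz|Hz].
  { subst. replace (cscale c c0) with c0 by (apply Ceq; unfold cscale, c0; simpl; ring). auto. }
  rewrite !ph_nz; auto. 2: apply cscale_eq0; auto; lra.
  rewrite cnorm_scale by lra. rewrite cscale_cscale. f_equal.
  assert (0 < cnorm z) by (apply cnorm_pos; auto). field; lra.
Qed.

Lemma ph_hp p z : ph (hp p z) = ph z.
Proof.
  destruct (Ceq_dec z c0) as [Hz|Hz]. { subst; rewrite hp_c0; auto. }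
  rewrite hp_nz by auto. apply ph_scale, Rpower_pos.
Qed.

Lemma toK_hp p z : toK (hp p z) = toK z.
Proof.
  unfold toK. destruct (Ceq_dec (hp p z) c0) as [H|H]; destruct (Ceq_dec z c0) as [Hz|Hz]; auto.
  - exfalso; apply Hz; eapply hp_eq0; eauto.
  - exfalso; apply H; rewrite Hz; apply hp_c0.
Qed.

Lemma cnorm_ph z : z <> c0 -> cnorm (ph z) = 1.
Proof. intro Hz. rewrite ph_nz by auto. rewrite cnorm_scale.
  - assert (0 < cnorm z) by (apply cnorm_pos; auto). field; lra.
  - left; apply Rinv_0_lt_compat, cnorm_pos; auto. Qed.

Lemma hp_real p x : hp p (x, 0) = (x * Rpower (Rabs x) (p - 1), 0).
Proof.
  destruct (Req_EM_T x 0) as [Hx|Hx].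
  { subst. fold c0. rewrite hp_c0. apply Ceq; simpl; ring. }
  rewrite hp_nz. 2:{ intro H. apply Hx. change (fst (x,0) = fst c0). rewrite H; reflexivity. }
  rewrite cnorm_real. apply Ceq; simpl; ring.
Qed.

(** * Generic hyperfield transfer *)
Definition hwf (F : hyperfield) : Prop :=
  hdom F c0 /\ hdom F c1 /\ (forall x, hdom F x -> hdom F (hneg F x)) /\
  (forall a b, hdom F a -> hdom F b -> hdom F (cmul a b)) /\
  (forall x y z, hdom F x -> hdom F y -> hadd F x y z -> hdom F z) /\
  (forall a, hdom F a -> a <> c0 -> exists b, hdom F b /\ cmul b a = c1).

Definition hmorph (F G : hyperfield) (h : C -> C) : Prop :=
  (forall a b, h (cmul a b) = cmul (h a) (h b)) /\ h c0 = c0 /\ h c1 = c1 /\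
  (forall x, hdom F x -> h x = c0 -> x = c0) /\
  (forall x, hdom F x -> hdom G (h x)) /\
  (forall x, hdom F x -> h (hneg F x) = hneg G (h x)) /\
  (forall x y z, hdom F x -> hdom F y -> hadd F x y z -> hadd G (h x) (h y) (h z)).

Lemma sign_dom F m : hwf F -> hdom F (Nat.iter m (hneg F) c1).
Proof. intros (H0 & H1 & Hn & _). induction m; simpl; auto. Qed.

Lemma sign_morph F G h m : hwf F -> hmorph F G h ->
  h (Nat.iter m (hneg F) c1) = Nat.iter m (hneg G) c1.
Proof.
  intros Hw Hm. induction m; simpl.
  - apply Hm.
  - destruct Hm as (_&_&_&_&_&Hn&_). rewrite Hn by (apply sign_dom; auto). congruence.
Qed.

Lemma hsum_dom F l z : hwf F -> Forall (hdom F) l -> hsum F l z -> hdom F z.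
Proof.
  intros Hw. revert z. induction l as [|a l IH]; simpl; intros z Hl Hs.
  - subst; apply Hw.
  - destruct Hs as (y & Hy & Ha). inversion Hl; subst.
    pose proof Hw as (_&_&_&_&Hc&_). eapply Hc; [| |exact Ha]; auto.
Qed.

Lemma hsum_morph F G h l z : hwf F -> hmorph F G h -> Forall (hdom F) l ->
  hsum F l z -> hsum G (map h l) (h z).
Proof.
  intros Hw Hm. revert z. induction l as [|a l IH]; simpl; intros z Hl Hs.
  - subst. destruct Hm as (_&H0&_); exact H0.
  - destruct Hs as (y & Hy & Ha). inversion Hl; subst. exists (h y). split.
    + apply IH; auto.
    + destruct Hm as (_&_&_&_&_&_&Ha'). apply Ha'; auto. eapply hsum_dom; eauto.
Qed.

Lemma gp_terms_dom F r phi i j : hwf F -> (forall l, hdom F (phi l)) ->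
  Forall (hdom F) (gp_terms F r phi i j).
Proof.
  intros Hw Hphi. unfold gp_terms. apply Forall_forall. intros x Hx.
  apply in_map_iff in Hx. destruct Hx as (m & <- & _).
  pose proof Hw as (_&_&_&Hmul&_). apply Hmul; [apply sign_dom; auto|].
  apply Hmul; auto.
Qed.

Lemma gp_terms_map F G h r phi i j : hwf F -> hmorph F G h ->
  gp_terms G r (fun l => h (phi l)) i j = map h (gp_terms F r phi i j).
Proof.
  intros Hw Hm. unfold gp_terms. rewrite map_map. apply map_ext. intro m.
  pose proof Hm as (Hmul & _). rewrite !Hmul. f_equal. symmetry; apply sign_morph; auto.
Qed.

Lemma GP_transfer F G h k n r phi : hwf F -> hmorph F G h ->
  GP F k n r phi -> GP G k n r (fun l => h (phi l)).
Proof.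
  intros Hw Hm HG.
  pose proof Hm as (Hmul & Hh0 & Hh1 & Hz & Hd & Hn & Ha).
  assert (HA : forall phi, Adom F n r phi -> Adom G n r (fun l => h (phi l))).
  { intros ph0 ((Hd0 & Hv0) & l & Hl & Hnz). refine (conj (conj _ _) _).
    - intro l'; apply Hd; auto.
    - intros l' Hl'. rewrite Hv0; auto.
    - exists l; split; [auto|]. intro E; apply Hnz, Hz; auto. }
  assert (HAl : forall phi, Adom F n r phi -> alternating F n r phi ->
                alternating G n r (fun l => h (phi l))).
  { intros ph0 ((Hd0 & _) & _) (Hal1 & Hal2). split.
    - intros l Hl Hnd. rewrite Hal1; auto.
    - intros l i j Hl Hij Hj. rewrite Hal2; auto. }
  assert (Hsum : forall phi i j, (forall l, hdom F (phi l)) ->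
     hsum F (gp_terms F r phi i j) c0 -> hsum G (gp_terms G r (fun l => h (phi l)) i j) c0).
  { intros ph0 i j Hd0 Hs. rewrite (gp_terms_map F G) by auto. rewrite <- Hh0.
    apply (hsum_morph F G); auto. apply gp_terms_dom; auto. }
  destruct k; simpl in *.
  - destruct HG as (HAd & HAlt & HGP). split; [auto|split; [auto|]].
    intros i j Hi Hj. apply Hsum; auto. apply HAd.
  - destruct HG as (HAd & HAlt & HMs & HGP). split; [auto|split; [auto|split]].
    + assert (E : forall l, h (phi l) <> c0 <-> phi l <> c0).
      { intro l; split; intros H1 H2.
        - apply H1; rewrite H2; auto.
        - apply H1, Hz; auto. apply HAd. }
      intros l1 l2 Hl1 Hl2 H1 H2 x Hx1 Hx2.
      apply E in H1; apply E in H2.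
      destruct (HMs l1 l2 Hl1 Hl2 H1 H2 x Hx1 Hx2) as (y & Hy1 & Hy2 & l3 & Hl3 & H3 & Hz3).
      exists y; split; auto; split; auto; exists l3; split; auto; split; auto.
      apply E; auto.
    + intros i j Hi Hj Hc. apply Hsum; auto. apply HAd.
Qed.

Lemma Adom_transfer F G h n r phi : hmorph F G h -> Adom F n r phi -> Adom G n r (fun l => h (phi l)).
Proof.
  intros Hm ((Hd0 & Hv0) & l & Hl & Hnz).
  pose proof Hm as (Hmul & Hh0 & Hh1 & Hz & Hd & Hn & Ha).
  refine (conj (conj _ _) _).
  - intro l'; apply Hd; auto.
  - intros l' Hl'. rewrite Hv0; auto.
  - exists l; split; [auto|]. intro E; apply Hnz, Hz; auto.
Qed.

Lemma cls_self F phi : hwf F -> cls F phi phi.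
Proof. intros (H0 & H1 & _). exists c1. split; auto. split; [apply c1_neq0|].
  apply functional_extensionality; intro l; rewrite cmul_c1; auto. Qed.

Lemma cls_scale F a phi : hwf F -> hdom F a -> a <> c0 ->
  cls F (fun l => cmul a (phi l)) = cls F phi.
Proof.
  intros Hw Ha Hna. pose proof Hw as (_ & _ & _ & Hmul & _ & Hinv).
  apply functional_extensionality; intro psi; apply propositional_extensionality; split.
  - intros (b & Hb & Hnb & ->). exists (cmul b a). split; [auto|split; [apply cmul_neq0; auto|]].
    apply functional_extensionality; intro l; apply cmul_assoc.
  - intros (b & Hb & Hnb & ->). destruct (Hinv a Ha Hna) as (a' & Ha' & Ea').
    exists (cmul b a'). split; [auto|split].
    + apply cmul_neq0; auto. intro E; subst. rewrite cmul_c0 in Ea'. apply c1_neq0; auto.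
    + apply functional_extensionality; intro l.
      rewrite cmul_assoc, <- (cmul_assoc b a' a), Ea', (cmul_comm b c1), cmul_c1. auto.
Qed.

Lemma cls_eq F phi psi : hwf F -> cls F phi = cls F psi ->
  exists a, hdom F a /\ a <> c0 /\ phi = (fun l => cmul a (psi l)).
Proof. intros Hw E. assert (H := cls_self F phi Hw). rewrite E in H. exact H. Qed.

Definition Hh (F : hyperfield) (x : Pt) (t : R) : Pt :=
  fun psi => exists phi, x = cls F phi /\ cls F (fun l => hp (1 - t) (phi l)) psi.

Lemma Hh_cls F phi t : hwf F -> hmorph F F (hp (1 - t)) -> (forall l, hdom F (phi l)) ->
  Hh F (cls F phi) t = cls F (fun l => hp (1 - t) (phi l)).
Proof.
  intros Hw Hm Hd. apply functional_extensionality; intro psi; apply propositional_extensionality; split.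
  - intros (phi' & E & Hpsi). symmetry in E. destruct (cls_eq F _ _ Hw E) as (a & Ha & Hna & ->).
    pose proof Hm as (_&_&_&Hz&Hdd&_).
    assert (E2 : (fun l => hp (1 - t) (cmul a (phi l))) =
                 (fun l => cmul (hp (1 - t) a) (hp (1 - t) (phi l)))).
    { apply functional_extensionality; intro l; apply hp_mul. }
    rewrite E2 in Hpsi. rewrite (cls_scale F) in Hpsi; [exact Hpsi|exact Hw|apply Hdd; auto|apply hp_neq0; auto].
  - intro H. exists phi; split; auto.
Qed.

Fixpoint enum (n r : nat) : list (list nat) :=
  match r with
  | O => [[]]
  | S r' => flat_map (fun i => map (cons i) (enum n r')) (seq 0 n)
  end.

Lemma enum_valid n r l : valid n r l -> In l (enum n r).
Proof.
  revert l; induction r as [|r IH]; intros l (Hlen & Hf).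
  - destruct l; simpl in *; [auto|discriminate].
  - destruct l as [|a l]; simpl in *; [discriminate|]. inversion Hf; subst.
    apply in_flat_map. exists a. split. apply in_seq; lia.
    apply in_map. apply IH. split; auto.
Qed.

Lemma finite_delta {A} (L : list A) (P : A -> R -> Prop) :
  (forall a d d', 0 < d' <= d -> P a d -> P a d') ->
  (forall a, In a L -> exists d, 0 < d /\ P a d) ->
  exists d, 0 < d /\ forall a, In a L -> P a d.
Proof.
  intros Hmono. induction L as [|a L IH]; intro H.
  - exists 1; split; [lra|]. intros a [].
  - destruct IH as (d1 & Hd1 & H1). { intros b Hb; apply H; simpl; auto. }
    destruct (H a) as (d2 & Hd2 & H2). { simpl; auto. }
    exists (Rmin d1 d2). split. { apply Rmin_glb_lt; auto. }
    intros b [<-|Hb].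
    + eapply Hmono; [|exact H2]. split; [apply Rmin_glb_lt; auto|apply Rmin_r].
    + eapply Hmono; [|apply H1; auto]. split; [apply Rmin_glb_lt; auto|apply Rmin_l].
Qed.

Lemma cnorm_scale_abs s z : cnorm (cscale s z) = Rabs s * cnorm z.
Proof.
  destruct z as [x y]. cbv [cnorm cscale fst snd].
  replace ((s * x) ^ 2 + (s * y) ^ 2) with (s² * (x ^ 2 + y ^ 2)) by (unfold Rsqr; ring).
  rewrite sqrt_mult_alt. 2: apply Rle_0_sqr. rewrite sqrt_Rsqr_abs; auto.
Qed.

Lemma cnorm_csub_sym a b : cnorm (csub a b) = cnorm (csub b a).
Proof. rewrite <- cnorm_neg. f_equal. apply Ceq; unfold csub, cadd, cneg; simpl; ring. Qed.

Lemma cont_eps f D x0 : continue_in f D x0 ->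
  forall e, 0 < e -> exists d, 0 < d /\ forall x, D x -> Rabs (x - x0) < d -> Rabs (f x - f x0) < e.
Proof.
  intros Hc e He. destruct (Hc e He) as (d & Hd & H). exists d; split; [lra|].
  intros x Dx Hx. destruct (Req_EM_T x x0) as [E|E].
  - subst. replace (f x0 - f x0) with 0 by ring. rewrite Rabs_R0; auto.
  - apply (H x). split; [split; auto|]. exact Hx.
Qed.

Lemma rpow_cont x0 p e1 : 0 < x0 -> 0 < e1 -> exists d, 0 < d /\
  forall x q, Rabs (x - x0) < d -> Rabs (q - p) < d ->
    Rabs (Rpower x (q - 1) - Rpower x0 (p - 1)) < e1.
Proof.
  intros Hx0 He1.
  destruct (cont_eps exp no_cond ((p - 1) * ln x0) (derivable_continuous _ derivable_exp _) e1 He1)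
    as (de & Hde & Hexp).
  set (dl := Rmin 1 (de / (2 * (Rabs (p - 1) + 1)))).
  assert (Hdl : 0 < dl).
  { unfold dl. apply Rmin_glb_lt; [lra|]. apply Rdiv_lt_0_compat; [lra|].
    generalize (Rabs_pos (p - 1)); lra. }
  destruct (cont_eps ln (fun x => 0 < x) x0 (ln_continue x0 Hx0) dl Hdl) as (dln & Hdln & Hln).
  set (dq := de / (2 * (Rabs (ln x0) + 1))).
  assert (Hdq : 0 < dq) by (unfold dq; apply Rdiv_lt_0_compat; [lra|]; generalize (Rabs_pos (ln x0)); lra).
  exists (Rmin dln (Rmin x0 dq)). split.
  { apply Rmin_glb_lt; auto. apply Rmin_glb_lt; auto. }
  intros x q Hx Hq.
  assert (Hx1 : Rabs (x - x0) < dln) by (eapply Rlt_le_trans; [exact Hx|apply Rmin_l]).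
  assert (Hx2 : Rabs (x - x0) < x0) by
     (eapply Rlt_le_trans; [exact Hx|]; eapply Rle_trans; [apply Rmin_r|apply Rmin_l]).
  assert (Hq2 : Rabs (q - p) < dq) by
     (eapply Rlt_le_trans; [exact Hq|]; eapply Rle_trans; [apply Rmin_r|apply Rmin_r]).
  assert (Hxpos : 0 < x) by (apply Rabs_def2 in Hx2; lra).
  specialize (Hln x Hxpos Hx1).
  assert (Hl1 : Rabs (ln x - ln x0) < 1) by (eapply Rlt_le_trans; [exact Hln|apply Rmin_l]).
  assert (Hl2 : Rabs (ln x - ln x0) < de / (2 * (Rabs (p - 1) + 1)))
    by (eapply Rlt_le_trans; [exact Hln|apply Rmin_r]).
  unfold Rpower. apply Hexp; [exact I|].
  replace ((q - 1) * ln x - (p - 1) * ln x0) with ((q - p) * ln x + (p - 1) * (ln x - ln x0)) by ring.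
  eapply Rle_lt_trans; [apply Rabs_triang|]. rewrite !Rabs_mult.
  assert (Hlx : Rabs (ln x) <= Rabs (ln x0) + 1).
  { replace (ln x) with ((ln x - ln x0) + ln x0) by ring.
    eapply Rle_trans; [apply Rabs_triang|]. lra. }
  assert (A1 : Rabs (q - p) * Rabs (ln x) <= Rabs (q - p) * (Rabs (ln x0) + 1))
    by (apply Rmult_le_compat_l; [apply Rabs_pos|auto]).
  assert (A2 : Rabs (q - p) * (Rabs (ln x0) + 1) < de / 2).
  { unfold dq in Hq2. apply Rmult_lt_compat_r with (r := Rabs (ln x0) + 1) in Hq2.
    2: generalize (Rabs_pos (ln x0)); lra.
    replace (de / (2 * (Rabs (ln x0) + 1)) * (Rabs (ln x0) + 1)) with (de / 2) in Hq2; auto.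
    field. generalize (Rabs_pos (ln x0)); lra. }
  assert (A3 : Rabs (p - 1) * Rabs (ln x - ln x0) < de / 2).
  { assert (Hp := Rabs_pos (p - 1)).
    apply Rle_lt_trans with ((Rabs (p - 1) + 1) * Rabs (ln x - ln x0)).
    { apply Rmult_le_compat_r; [apply Rabs_pos|lra]. }
    apply Rmult_lt_compat_l with (r := Rabs (p - 1) + 1) in Hl2; [|lra].
    replace ((Rabs (p - 1) + 1) * (de / (2 * (Rabs (p - 1) + 1)))) with (de / 2) in Hl2; auto.
    field. lra. }
  lra.
Qed.

Lemma hp_cont z0 p eps : z0 <> c0 -> 0 < eps -> exists d, 0 < d /\
  forall w q, cnorm (csub w z0) < d -> Rabs (q - p) < d ->
    cnorm (csub (hp p z0) (hp q w)) < eps.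
Proof.
  intros Hz0 He. set (x0 := cnorm z0). assert (Hx0 : 0 < x0) by (apply cnorm_pos; auto).
  set (B := Rpower x0 (p - 1)). assert (HB : 0 < B) by apply Rpower_pos.
  set (e1 := eps / (2 * (x0 + 1))). assert (He1 : 0 < e1) by (unfold e1; apply Rdiv_lt_0_compat; lra).
  destruct (rpow_cont x0 p e1 Hx0 He1) as (dr & Hdr & Hr).
  set (d2 := eps / (2 * (B + 1))). assert (Hd2 : 0 < d2) by (unfold d2; apply Rdiv_lt_0_compat; lra).
  exists (Rmin (Rmin (x0 / 2) 1) (Rmin dr d2)). split.
  { repeat apply Rmin_glb_lt; lra. }
  intros w q Hw Hq.
  assert (Hw1 : cnorm (csub w z0) < x0 / 2) by
    (eapply Rlt_le_trans; [exact Hw|]; eapply Rle_trans; [apply Rmin_l|apply Rmin_l]).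
  assert (Hw2 : cnorm (csub w z0) < 1) by
    (eapply Rlt_le_trans; [exact Hw|]; eapply Rle_trans; [apply Rmin_l|apply Rmin_r]).
  assert (Hw3 : cnorm (csub w z0) < dr) by
    (eapply Rlt_le_trans; [exact Hw|]; eapply Rle_trans; [apply Rmin_r|apply Rmin_l]).
  assert (Hw4 : cnorm (csub w z0) < d2) by
    (eapply Rlt_le_trans; [exact Hw|]; eapply Rle_trans; [apply Rmin_r|apply Rmin_r]).
  assert (Hq3 : Rabs (q - p) < dr) by
    (eapply Rlt_le_trans; [exact Hq|]; eapply Rle_trans; [apply Rmin_r|apply Rmin_l]).
  assert (Hrev := cnorm_sub_rev w z0). fold x0 in Hrev.
  assert (Hrv : Rabs (cnorm w - x0) < x0 / 2) by lra.
  assert (Hrv2 : Rabs (cnorm w - x0) < 1) by lra.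
  apply Rabs_def2 in Hrv. apply Rabs_def2 in Hrv2.
  assert (Hwn : 0 < cnorm w) by lra.
  assert (Hwne : w <> c0) by (intro E; subst; rewrite cnorm_c0 in Hwn; lra).
  assert (Hwle : cnorm w <= x0 + 1) by lra.
  specialize (Hr (cnorm w) q (Rle_lt_trans _ _ _ Hrev Hw3) Hq3).
  rewrite cnorm_csub_sym, !hp_nz by auto. fold x0 B.
  rewrite csub_scale_split.
  eapply Rle_lt_trans; [apply cnorm_triangle|]. rewrite !cnorm_scale_abs.
  rewrite (Rabs_right B) by lra.
  assert (A1 : Rabs (Rpower (cnorm w) (q - 1) - B) * cnorm w <= e1 * (x0 + 1)).
  { fold B in Hr. apply Rmult_le_compat; try apply Rabs_pos; lra. }
  assert (A2 : e1 * (x0 + 1) = eps / 2) by (unfold e1; field; lra).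
  assert (A3 : B * cnorm (csub w z0) <= B * d2) by (apply Rmult_le_compat_l; lra).
  assert (A4 : B * d2 < eps / 2).
  { unfold d2. replace (B * (eps / (2 * (B + 1)))) with (eps / 2 * (B / (B + 1))) by (field; lra).
    assert (B / (B + 1) < 1) by (apply Rmult_lt_reg_r with (B + 1); [lra|]; field_simplify; lra).
    nra. }
  lra.
Qed.

(** * The generic contractibility theorem *)
Lemma GP_dom F k n r phi : GP F k n r phi -> forall l, hdom F (phi l).
Proof. destruct k; simpl; intros H; apply H. Qed.

Lemma GP_Adom F k n r phi : GP F k n r phi -> Adom F n r phi.
Proof. destruct k; simpl; intros H; apply H. Qed.

Theorem generic (F F' : hyperfield) (f : C -> C) (k k' : GPkind) (n r : nat) (M : Pt) :
  hwf F -> hwf F' ->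
  (forall z, hdom F' z -> hdom F z) ->
  (forall psi, GP F' k' n r psi -> GP F k n r psi) ->
  (forall z, hdom F' z -> f z = z) ->
  (forall z, hdom F z -> f z = c0 -> z = c0) ->
  f c0 = c0 ->
  (forall z, hdom F z -> hp 0 z = f z) ->
  (forall p z, f (hp p z) = f z) ->
  (forall p, 0 <= p <= 1 -> hmorph F F (hp p)) ->
  Gr F' k' n r M ->
  contractible (qopen F n r) (Real f F F' k n r M).
Proof.
  intros HwF HwF' Hsub Hemb Hfid Hf0 Hfc0 Hhp0 Hfhp Hmor HM.
  destruct HM as (psi0 & Hpsi0 & ->).
  assert (Hd0 := GP_dom _ _ _ _ _ Hpsi0).
  assert (Hsupp : forall phi phi2, GP F k n r phi -> GP F k n r phi2 ->
            cls F' (fun l => f (phi l)) = cls F' psi0 ->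
            cls F' (fun l => f (phi2 l)) = cls F' psi0 ->
            forall l, phi l = c0 -> phi2 l = c0).
  { intros phi phi2 Hp Hp2 Hm Hm2 l Hl. rewrite <- Hm in Hm2.
    destruct (cls_eq F' _ _ HwF' Hm2) as (a & Ha & Hna & E).
    apply Hf0; [apply (GP_dom _ _ _ _ _ Hp2)|].
    change (f (phi2 l)) with ((fun l => f (phi2 l)) l). rewrite E. cbv beta.
    rewrite Hl, Hfc0, cmul_comm, cmul_c0. auto. }
  exists (cls F psi0). split.
  { exists psi0. split; [auto|split; [auto|]]. f_equal. apply functional_extensionality; intro l; auto. }
  exists (Hh F). split; [|split; [|split]].
  - intros x t (phi & Hphi & -> & Hm) Ht.
    assert (Hmt : hmorph F F (hp (1 - t))) by (apply Hmor; lra).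
    rewrite Hh_cls; auto; [|apply (GP_dom _ _ _ _ _ Hphi)].
    exists (fun l => hp (1 - t) (phi l)). split; [apply (GP_transfer F F); auto|split; auto].
    rewrite <- Hm. f_equal. apply functional_extensionality; intro l; auto.
  - intros x (phi & Hphi & -> & Hm).
    assert (Hmt : hmorph F F (hp (1 - 0))) by (apply Hmor; lra).
    rewrite Hh_cls; auto; [|apply (GP_dom _ _ _ _ _ Hphi)].
    f_equal. apply functional_extensionality; intro l. replace (1 - 0) with 1 by ring. apply hp_1.
  - intros x (phi & Hphi & -> & Hm).
    assert (Hmt : hmorph F F (hp (1 - 1))) by (apply Hmor; lra).
    rewrite Hh_cls; auto; [|apply (GP_dom _ _ _ _ _ Hphi)].
    replace (1 - 1) with 0 by ring.
    replace (fun l => hp 0 (phi l)) with (fun l => f (phi l)).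
    2:{ apply functional_extensionality; intro l. symmetry; apply Hhp0, (GP_dom _ _ _ _ _ Hphi). }
    destruct (cls_eq F' _ _ HwF' Hm) as (a & Ha & Hna & E). rewrite E.
    apply cls_scale; auto.
  - intros V HV x t (phi & Hphi & -> & Hm) Ht HVx.
    assert (Hdphi := GP_dom _ _ _ _ _ Hphi).
    assert (Hmt : hmorph F F (hp (1 - t))) by (apply Hmor; lra).
    rewrite Hh_cls in HVx; auto.
    set (p := 1 - t) in *.
    destruct (HV (fun l => hp p (phi l))) as (eps & Heps & Hball); auto.
    { apply (Adom_transfer F F); auto. apply (GP_Adom _ _ _ _ _ Hphi). }
    destruct (finite_delta (enum n r) (fun l d => phi l <> c0 -> forall w q,
       cnorm (csub w (phi l)) < d -> Rabs (q - p) < d -> cnorm (csub (hp p (phi l)) (hp q w)) < eps))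
      as (delta & Hdelta & Hdl).
    { intros l d d' Hd' H Hnz w q H1 H2. apply H; auto; lra. }
    { intros l _. destruct (Ceq_dec (phi l) c0) as [E|E].
      - exists 1. split; [lra|]. intro; contradiction.
      - destruct (hp_cont (phi l) p eps E Heps) as (d & Hd & H). exists d; split; auto. }
    exists (fun c => exists psi, c = cls F psi /\ Adom F n r psi /\ exists d, d < delta /\
               forall l, valid n r l -> cnorm (csub (phi l) (psi l)) <= d).
    split; [|split].
    +
      intros phi2 HA2 (psi & Ec & HApsi & d & Hd & Hclose).
      symmetry in Ec. destruct (cls_eq F _ _ HwF Ec) as (a & Ha & Hna & Epsi).
      set (A := cnorm a).
      assert (HA0 : 0 <= A) by apply cnorm_ge0.
      exists ((delta - d) / (2 * (A + 1))). split.
      { apply Rdiv_lt_0_compat; lra. }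
      intros phi3 HA3 H3.
      pose proof HwF as (_&_&_&Hmul&_).
      exists (fun l => cmul a (phi3 l)). split; [|split].
      * symmetry; apply cls_scale; auto.
      * destruct HA3 as ((Hd3 & Hv3) & l0 & Hl0 & Hnz0). refine (conj (conj _ _) _).
        -- intro l; apply Hmul; auto.
        -- intros l Hl; rewrite Hv3 by auto. rewrite cmul_comm; apply cmul_c0.
        -- exists l0; split; auto. apply cmul_neq0; auto.
      * exists (d + (delta - d) / 2). split; [lra|]. intros l Hl.
        replace (csub (phi l) (cmul a (phi3 l))) with
          (cadd (csub (phi l) (cmul a (phi2 l))) (cmul a (csub (phi2 l) (phi3 l))))
          by (apply Ceq; unfold csub, cadd, cneg, cmul; simpl; ring).
        eapply Rle_trans; [apply cnorm_triangle|].
        assert (E1 : cmul a (phi2 l) = psi l) by (rewrite Epsi; auto).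
        rewrite E1, cnorm_mul. fold A.
        specialize (Hclose l Hl). specialize (H3 l Hl).
        assert (A * cnorm (csub (phi2 l) (phi3 l)) <= A * ((delta - d) / (2 * (A + 1))))
          by (apply Rmult_le_compat_l; lra).
        assert (A * ((delta - d) / (2 * (A + 1))) <= (delta - d) / 2).
        { replace (A * ((delta - d) / (2 * (A + 1)))) with ((delta - d) / 2 * (A / (A + 1))) by (field; lra).
          assert (A / (A + 1) <= 1) by (apply Rmult_le_reg_r with (A + 1); [lra|]; field_simplify; lra).
          assert (0 <= (delta - d) / 2) by lra. nra. }
        lra.
    + exists phi. split; auto. split; [apply (GP_Adom _ _ _ _ _ Hphi)|].
      exists 0. split; auto. intros l _.
      replace (csub (phi l) (phi l)) with c0 by (apply Ceq; unfold csub, cadd, cneg, c0; simpl; ring).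
      rewrite cnorm_c0; lra.
    + exists delta. split; auto.
      intros y s (phi2 & Hphi2 & Ey & Hm2) (psi & Ec & HApsi & d & Hd & Hclose) Hs Hst.
      assert (Hdpsi : forall l, hdom F (psi l)) by apply HApsi.
      assert (Hms : hmorph F F (hp (1 - s))) by (apply Hmor; lra).
      rewrite Ec. rewrite Hh_cls; auto.
      apply Hball.
      { apply (Adom_transfer F F); auto. }
      intros l Hl.
      destruct (Ceq_dec (phi l) c0) as [E|E].
      * assert (E2 : psi l = c0).
        { rewrite Ey in Ec. symmetry in Ec. destruct (cls_eq F _ _ HwF Ec) as (b & Hb & Hnb & Eb).
          rewrite Eb; cbv beta. rewrite (Hsupp phi phi2 Hphi Hphi2 Hm Hm2 l E). rewrite cmul_comm; apply cmul_c0. }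
        rewrite E, E2, !hp_c0.
        replace (csub c0 c0) with c0 by (apply Ceq; unfold csub, cadd, cneg, c0; simpl; ring).
        rewrite cnorm_c0; lra.
      * apply (Hdl l (enum_valid _ _ _ Hl) E).
        -- rewrite cnorm_csub_sym. specialize (Hclose l Hl). lra.
        -- unfold p. replace (1 - s - (1 - t)) with (t - s) by ring. rewrite Rabs_minus_sym. auto.
Qed.

Definition gf (p x : R) : R := if Req_EM_T x 0 then 0 else Rpower x p.

Lemma gf_0 p : gf p 0 = 0.
Proof. unfold gf; destruct (Req_EM_T 0 0); congruence. Qed.

Lemma gf_pos p x : 0 < x -> gf p x = Rpower x p.
Proof. intro H; unfold gf; destruct (Req_EM_T x 0); [lra|auto]. Qed.

Lemma gf_nonneg p x : 0 <= gf p x.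
Proof. unfold gf; destruct (Req_EM_T x 0); [lra|left; apply Rpower_pos]. Qed.

Lemma gf_eq0 p x : 0 <= x -> gf p x = 0 -> x = 0.
Proof. intros Hx H. unfold gf in H; destruct (Req_EM_T x 0); auto.
  generalize (Rpower_pos x p); lra. Qed.

Lemma gf_mono p x y : 0 <= p -> 0 <= x <= y -> gf p x <= gf p y.
Proof.
  intros Hp Hxy. destruct (Req_EM_T x 0) as [E|E].
  - subst; rewrite gf_0; apply gf_nonneg.
  - rewrite !gf_pos by lra. apply Rle_Rpower_l; auto; lra.
Qed.

Lemma gf_smono p x y : 0 < p -> 0 <= x < y -> gf p x < gf p y.
Proof.
  intros Hp Hxy. destruct (Req_EM_T x 0) as [E|E].
  - subst; rewrite gf_0, gf_pos by lra. apply Rpower_pos.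
  - rewrite !gf_pos by lra. apply Rlt_Rpower_l; auto; lra.
Qed.

Lemma gf_p0 x : 0 < x -> gf 0 x = 1.
Proof. intro H; rewrite gf_pos by auto; apply Rpower_O; auto. Qed.

Lemma exp_le_mono a b : a <= b -> exp a <= exp b.
Proof. intros [H|H]; [left; apply exp_increasing; auto|subst; lra]. Qed.

Lemma Rpower_ge_self u p : 0 < u <= 1 -> p <= 1 -> u <= Rpower u p.
Proof.
  intros Hu Hp. unfold Rpower. rewrite <- (exp_ln u) at 1 by lra.
  assert (ln u <= 0).
  { destruct (Req_EM_T u 1) as [E|E]. subst; rewrite ln_1; lra.
    left. rewrite <- ln_1. apply ln_increasing; lra. }
  apply exp_le_mono. nra.
Qed.

Lemma gf_subadd p x y : 0 <= p <= 1 -> 0 <= x -> 0 <= y -> gf p (x + y) <= gf p x + gf p y.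
Proof.
  intros Hp Hx Hy.
  destruct (Req_EM_T x 0) as [E|E]. { subst; rewrite gf_0, Rplus_0_l; lra. }
  destruct (Req_EM_T y 0) as [E'|E']. { subst; rewrite gf_0, Rplus_0_r; lra. }
  rewrite !gf_pos by lra. set (s := x + y).
  assert (Hs : 0 < s) by (unfold s; lra).
  assert (Hu : x = (x / s) * s) by (field; lra).
  assert (Hv : y = (y / s) * s) by (field; lra).
  assert (H1 : x / s <= Rpower (x / s) p).
  { apply Rpower_ge_self; [split|lra]. apply Rdiv_lt_0_compat; lra.
    apply Rmult_le_reg_r with s; auto. unfold Rdiv; rewrite Rmult_assoc, Rinv_l by lra. unfold s; lra. }
  assert (H2 : y / s <= Rpower (y / s) p).
  { apply Rpower_ge_self; [split|lra]. apply Rdiv_lt_0_compat; lra.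
    apply Rmult_le_reg_r with s; auto. unfold Rdiv; rewrite Rmult_assoc, Rinv_l by lra. unfold s; lra. }
  assert (E1 : Rpower x p = Rpower (x / s) p * Rpower s p).
  { rewrite Rpower_mult_distr by (auto; apply Rdiv_lt_0_compat; lra). f_equal; auto. }
  assert (E2 : Rpower y p = Rpower (y / s) p * Rpower s p).
  { rewrite Rpower_mult_distr by (auto; apply Rdiv_lt_0_compat; lra). f_equal; auto. }
  rewrite E1, E2.
  assert (HS := Rpower_pos s p).
  assert (x / s + y / s = 1) by (unfold s; field; lra).
  nra.
Qed.

Lemma cnorm_hp_gf p z : cnorm (hp p z) = gf p (cnorm z).
Proof.
  destruct (Ceq_dec z c0) as [E|E].
  - subst. rewrite hp_c0, cnorm_c0, gf_0; auto.
  - rewrite cnorm_hp, gf_pos; auto. apply cnorm_pos; auto.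
Qed.

Lemma hp_real_nn p x : 0 <= x -> hp p (x, 0) = (gf p x, 0).
Proof.
  intro Hx. rewrite hp_real. destruct (Req_EM_T x 0) as [E|E].
  - subst. rewrite gf_0. apply Ceq; simpl; ring.
  - rewrite gf_pos by lra. rewrite Rabs_right by lra. apply Ceq; simpl; auto.
    rewrite Rmult_comm. apply Rpower_m1; lra.
Qed.

Definition cinv (a : C) : C :=
  (fst a / (fst a * fst a + snd a * snd a), - snd a / (fst a * fst a + snd a * snd a)).

Lemma cnorm2_pos a : a <> c0 -> 0 < fst a * fst a + snd a * snd a.
Proof.
  intro H. destruct a as [x y]; simpl.
  destruct (Req_EM_T x 0); destruct (Req_EM_T y 0); try nra.
  subst. exfalso; apply H; reflexivity.
Qed.

Lemma cinv_l a : a <> c0 -> cmul (cinv a) a = c1.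
Proof.
  intro H. assert (HN := cnorm2_pos a H). destruct a as [x y]; simpl in *.
  unfold cmul, cinv, c1; simpl. apply Ceq; simpl; field; lra.
Qed.

Lemma cmul_r_c0 z : cmul z c0 = c0.
Proof. rewrite cmul_comm; apply cmul_c0. Qed.
Lemma cmul_r_c1 z : cmul z c1 = z.
Proof. rewrite cmul_comm; apply cmul_c1. Qed.
Lemma cmul_m1_m1 : cmul (cneg c1) (cneg c1) = c1.
Proof. apply Ceq; unfold cmul, cneg, c1; simpl; ring. Qed.

Lemma hwf_HTC : hwf HTC.
Proof.
  repeat split; simpl; auto. intros a _ Ha. exists (cinv a). split; auto. apply cinv_l; auto.
Qed.

Lemma hwf_HTR : hwf HTR.
Proof.
  unfold hwf; simpl. refine (conj _ (conj _ (conj _ (conj _ (conj _ _))))).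
  - reflexivity.
  - reflexivity.
  - intros x H; unfold cneg; simpl; rewrite H; ring.
  - intros a b Ha Hb; unfold cmul; simpl; rewrite Ha, Hb; ring.
  - intros x y z Hx Hy [(_ & ->)|[(_ & ->)|[(_ & ->)|(_ & H & _)]]]; auto.
  - intros a Ha Hna. exists (cinv a). split; [|apply cinv_l; auto].
    unfold cinv; simpl; rewrite Ha. unfold Rdiv. rewrite Ropp_0. apply Rmult_0_l.
Qed.

Lemma Rnn_mul a b : Rnn_dom a -> Rnn_dom b -> Rnn_dom (cmul a b).
Proof. intros (Ha1 & Ha2) (Hb1 & Hb2). unfold cmul, Rnn_dom; simpl; rewrite Ha1, Hb1.
  split; [ring|]. nra. Qed.

Lemma Rnn_inv a : Rnn_dom a -> a <> c0 -> exists b, Rnn_dom b /\ cmul b a = c1.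
Proof.
  intros (Ha1 & Ha2) Hna. exists (cinv a). split; [|apply cinv_l; auto].
  assert (HN := cnorm2_pos a Hna).
  unfold cinv, Rnn_dom; simpl; rewrite Ha1 in *. split.
  - unfold Rdiv. rewrite Ropp_0. apply Rmult_0_l.
  - unfold Rdiv; apply Rmult_le_pos; auto. left; apply Rinv_0_lt_compat; lra.
Qed.

Lemma hwf_Htri : hwf Htri.
Proof.
  unfold hwf; simpl. refine (conj _ (conj _ (conj _ (conj _ (conj _ _))))).
  - split; simpl; lra.
  - split; simpl; lra.
  - auto.
  - apply Rnn_mul.
  - intros x y z _ _ (H & _); auto.
  - apply Rnn_inv.
Qed.

Lemma hwf_HTtri : hwf HTtri.
Proof.
  unfold hwf; simpl. refine (conj _ (conj _ (conj _ (conj _ (conj _ _))))).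
  - split; simpl; lra.
  - split; simpl; lra.
  - auto.
  - apply Rnn_mul.
  - intros x y z (Hx1 & Hx2) _ [(_ & ->)|(_ & H & _)]; auto.
    split; simpl; auto. eapply Rle_trans; [exact Hx2|apply Rmax_l].
  - apply Rnn_inv.
Qed.

Lemma hwf_HK : hwf HK.
Proof.
  unfold hwf; simpl. refine (conj _ (conj _ (conj _ (conj _ (conj _ _))))).
  - auto.
  - auto.
  - auto.
  - intros a b [->| ->] [->| ->]; rewrite ?cmul_c0, ?cmul_r_c0, ?cmul_c1; auto.
  - intros x y z Hx Hy [(_ & ->)|[(_ & ->)|(_ & _ & H)]]; auto.
  - intros a [->| ->] Hna; [contradiction|]. exists c1; split; auto. apply cmul_c1.
Qed.

Lemma hwf_HS : hwf HS.
Proof.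
  unfold hwf; simpl. unfold S_dom. refine (conj _ (conj _ (conj _ (conj _ (conj _ _))))).
  - auto.
  - auto.
  - intros x [->|[->| ->]]; rewrite ?cneg_c0, ?cneg_cneg; auto.
  - intros a b [->|[->| ->]] [->|[->| ->]]; rewrite ?cmul_c0, ?cmul_r_c0, ?cmul_c1, ?cmul_r_c1,
      ?cmul_m1_m1; auto.
  - intros x y z Hx Hy [(_ & ->)|[(_ & ->)|[(_ & _ & ->)|(_ & _ & H)]]]; auto.
  - intros a [->|[->| ->]] Hna; [contradiction| |].
    + exists c1; split; auto. apply cmul_c1.
    + exists (cneg c1); split; auto. apply cmul_m1_m1.
Qed.

Lemma cnorm1_sq a : cnorm a = 1 -> fst a * fst a + snd a * snd a = 1.
Proof.
  intro H. unfold cnorm in H.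
  replace (fst a * fst a + snd a * snd a) with (fst a ^ 2 + snd a ^ 2) by ring.
  rewrite <- (Rsqr_sqrt (fst a ^ 2 + snd a ^ 2)).
  - rewrite H. unfold Rsqr. ring.
  - nra.
Qed.

Lemma hwf_HPhi : hwf HPhi.
Proof.
  unfold hwf; simpl. unfold Phi_dom. refine (conj _ (conj _ (conj _ (conj _ (conj _ _))))).
  - auto.
  - right; apply cnorm_c1.
  - intros x [->|H]; [left; apply cneg_c0|right; rewrite cnorm_neg; auto].
  - intros a b [->|Ha] [->|Hb]; rewrite ?cmul_c0, ?cmul_r_c0; auto.
    right; rewrite cnorm_mul, Ha, Hb; ring.
  - intros x y z Hx Hy [(_ & ->)|[(_ & ->)|[(_ & _ & H)|(Hnx & _ & _ & s & t & _ & _ & _ & ->)]]]; auto.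
    destruct Hx as [Hx|Hx]; [contradiction|]. rewrite Hx, cscale_1.
    destruct (Ceq_dec (cadd (cscale s x) (cscale t y)) c0) as [E|E].
    + left; rewrite E; apply ph_c0.
    + right; apply cnorm_ph; auto.
  - intros a [->|Ha] Hna; [contradiction|]. exists (fst a, - snd a). split.
    + right. rewrite <- Ha. unfold cnorm; simpl. f_equal; ring.
    + apply cnorm1_sq in Ha. apply Ceq; unfold cmul, c1; simpl; lra.
Qed.

(** * The power maps are endomorphisms *)
Lemma Rnn_form z : Rnn_dom z -> z = (fst z, 0) /\ 0 <= fst z.
Proof. destruct z as [a b]; intros (H1 & H2); simpl in *; subst; auto. Qed.

Lemma tri_ineq p a b c : 0 <= p <= 1 -> 0 <= a -> 0 <= b -> 0 <= c ->
  Rabs (a - b) <= c <= a + b -> Rabs (gf p a - gf p b) <= gf p c <= gf p a + gf p b.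
Proof.
  intros Hp Ha Hb Hc (H1 & H2). split.
  - assert (K : forall a b, 0 <= a -> 0 <= b -> b <= a -> a - b <= c ->
                 Rabs (gf p a - gf p b) <= gf p c).
    { intros a' b' Ha' Hb' Hab Hc'.
      assert (gf p b' <= gf p a') by (apply gf_mono; lra).
      rewrite Rabs_right by lra.
      assert (gf p a' <= gf p (a' - b') + gf p b').
      { replace a' with ((a' - b') + b') at 1 by ring. apply gf_subadd; lra. }
      assert (gf p (a' - b') <= gf p c) by (apply gf_mono; lra).
      lra. }
    destruct (Rle_dec b a).
    + apply K; auto. apply Rabs_def2b in H1 || (apply Rle_trans with (Rabs (a - b)); [apply RRle_abs|auto]).
    + rewrite Rabs_minus_sym. apply K; try lra. rewrite Rabs_minus_sym in H1.
      apply Rle_trans with (Rabs (b - a)); [apply RRle_abs|auto].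
  - eapply Rle_trans; [apply gf_mono; [lra|split; [exact Hc|exact H2]]|]. apply gf_subadd; auto.
Qed.

Lemma hmorph_Htri p : 0 <= p <= 1 -> hmorph Htri Htri (hp p).
Proof.
  intro Hp. unfold hmorph; simpl.
  refine (conj (hp_mul p) (conj (hp_c0 p) (conj (hp_c1 p) (conj (fun x _ H => hp_eq0 p x H) (conj _ (conj _ _)))))).
  - intros x Hx. destruct (Rnn_form x Hx) as (E & H). rewrite E, hp_real_nn by auto.
    split; simpl; [auto|apply gf_nonneg].
  - auto.
  - intros x y z Hx Hy (Hz & H). destruct (Rnn_form x Hx) as (Ex & Hx'). destruct (Rnn_form y Hy) as (Ey & Hy').
    destruct (Rnn_form z Hz) as (Ez & Hz').
    rewrite Ex, Ey, Ez, !hp_real_nn by auto. simpl.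
    split; [split; simpl; [auto|apply gf_nonneg]|]. apply tri_ineq; auto.
Qed.

Lemma hmorph_HTtri p : 0 <= p <= 1 -> hmorph HTtri HTtri (hp p).
Proof.
  intro Hp. unfold hmorph; simpl.
  refine (conj (hp_mul p) (conj (hp_c0 p) (conj (hp_c1 p) (conj (fun x _ H => hp_eq0 p x H) (conj _ (conj _ _)))))).
  - intros x Hx. destruct (Rnn_form x Hx) as (E & H). rewrite E, hp_real_nn by auto.
    split; simpl; [auto|apply gf_nonneg].
  - auto.
  - intros x y z Hx Hy Hadd. destruct (Rnn_form x Hx) as (Ex & Hx'). destruct (Rnn_form y Hy) as (Ey & Hy').
    rewrite Ex, Ey, !hp_real_nn by auto. simpl.
    destruct Hadd as [(Hne & ->)|(Exy & Hz & Hzx)].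
    + rewrite hp_real_nn by (eapply Rle_trans; [exact Hx'|apply Rmax_l]).
      assert (Hmax : gf p (Rmax (fst x) (fst y)) = Rmax (gf p (fst x)) (gf p (fst y))).
      { unfold Rmax. destruct (Rle_dec (fst x) (fst y)); destruct (Rle_dec (gf p (fst x)) (gf p (fst y))); auto.
        - exfalso; apply n; apply gf_mono; lra.
        - apply Rle_antisym; auto. apply gf_mono; lra. }
      rewrite Hmax.
      destruct (Req_EM_T (gf p (fst x)) (gf p (fst y))) as [E|E].
      * right. rewrite E. split; auto. split; [split; simpl; [auto|]|].
        -- unfold Rmax; destruct (Rle_dec _ _); apply gf_nonneg.
        -- simpl. rewrite <- E. unfold Rmax; destruct (Rle_dec _ _); lra.
      * left. split; auto.
    + right. rewrite Exy. split; auto. destruct (Rnn_form z Hz) as (Ez & Hz').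
      rewrite Ez, hp_real_nn by auto. split; [split; simpl; [auto|apply gf_nonneg]|].
      simpl. apply gf_mono; [lra|]. rewrite Exy in Hzx. split; auto.
Qed.

Lemma hp_real_abs p a : exists G, hp p (a, 0) = (G, 0) /\ Rabs G = gf p (Rabs a).
Proof.
  exists (a * Rpower (Rabs a) (p - 1)). split; [apply hp_real|].
  rewrite <- cnorm_real, <- hp_real, cnorm_hp_gf, cnorm_real. auto.
Qed.

Lemma Rabs_eq_cases u v : Rabs u = Rabs v -> u = v \/ v = - u.
Proof. intro H. destruct (Rcase_abs u); destruct (Rcase_abs v);
  rewrite ?Rabs_left in H by auto; rewrite ?Rabs_right in H by auto;
  rewrite ?Rabs_left in H by auto; rewrite ?Rabs_right in H by auto; lra. Qed.

Lemma real_form (z : C) : snd z = 0 -> z = (fst z, 0).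
Proof. destruct z; simpl; intros; subst; auto. Qed.

Lemma hmorph_HTR p : 0 <= p <= 1 -> hmorph HTR HTR (hp p).
Proof.
  intro Hp. unfold hmorph; simpl.
  refine (conj (hp_mul p) (conj (hp_c0 p) (conj (hp_c1 p) (conj (fun x _ H => hp_eq0 p x H) (conj _ (conj _ _)))))).
  - intros x Hx. rewrite (real_form x Hx), hp_real. reflexivity.
  - intros x _; apply hp_neg.
  - intros x y z Hx Hy Hadd.
    destruct x as [a a2]; destruct y as [b b2]; simpl in Hx, Hy; subst a2 b2.
    destruct (hp_real_abs p a) as (Ga & Ea & Ha). destruct (hp_real_abs p b) as (Gb & Eb & Hb).
    assert (Hmono : forall u v, Rabs u <= Rabs v -> gf p (Rabs u) <= gf p (Rabs v))
      by (intros u v H; apply gf_mono; [lra|split; [apply Rabs_pos|auto]]).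
    simpl in Hadd. destruct Hadd as [(H & ->)|[(H & ->)|[(H & ->)|(H & Hz1 & Hz2)]]].
    + rewrite Ea, Eb; simpl.
      assert (Hge : Rabs Ga >= Rabs Gb) by (rewrite Ha, Hb; apply Rle_ge, Hmono; lra).
      destruct Hge as [Hgt|Heq]; [left; auto|].
      destruct (Rabs_eq_cases _ _ Heq) as [E|E].
      * right; right; left. subst; auto.
      * right; right; right. split; [apply Ceq; simpl; lra|split; simpl; [auto|lra]].
    + rewrite Ea, Eb; simpl.
      assert (Hge : Rabs Gb >= Rabs Ga) by (rewrite Ha, Hb; apply Rle_ge, Hmono; lra).
      destruct Hge as [Hgt|Heq]; [right; left; auto|].
      destruct (Rabs_eq_cases _ _ Heq) as [E|E].
      * right; right; left. subst; auto.
      * right; right; right. split; [apply Ceq; simpl; lra|split; simpl; [auto|]].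
        rewrite Heq; lra.
    + injection H; intros; subst. rewrite Ea. right; right; left; auto.
    + right; right; right. rewrite H, hp_neg. split; auto.
      rewrite (real_form z Hz1). destruct (hp_real_abs p (fst z)) as (Gc & Ec & Hc).
      rewrite Ec, Ea; simpl. split; auto. rewrite Hc, Ha. apply Hmono. simpl in Hz2. auto.
Qed.

Lemma cscale_c0 u : cscale u c0 = c0.
Proof. apply Ceq; unfold cscale, c0; simpl; ring. Qed.

Lemma ph_self a : a <> c0 -> cscale (cnorm a) (ph a) = a.
Proof. intro H. rewrite ph_nz by auto. rewrite cscale_cscale.
  rewrite Rinv_r by (apply Rgt_not_eq, cnorm_pos; auto). apply cscale_1. Qed.

Lemma on_arc_self a b : a <> c0 -> on_arc a b a.
Proof.
  intro H. exists 1, 0. split; [lra|split; [lra|split; [left; lra|]]].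
  replace (cadd (cscale 1 a) (cscale 0 b)) with a by (apply Ceq; unfold cadd, cscale; simpl; ring).
  symmetry; apply ph_self; auto.
Qed.

Lemma on_arc_other a b : b <> c0 -> cnorm a = cnorm b -> on_arc a b b.
Proof.
  intros H E. exists 0, 1. split; [lra|split; [lra|split; [right; lra|]]].
  replace (cadd (cscale 0 a) (cscale 1 b)) with b by (apply Ceq; unfold cadd, cscale; simpl; ring).
  rewrite E. symmetry; apply ph_self; auto.
Qed.

Lemma cnorm0_c0 z : cnorm z = 0 -> z = c0.
Proof. apply cnorm_eq0. Qed.

Lemma hp_same_norm p x y : cnorm x = cnorm y -> y <> c0 ->
  hp p x = cscale (Rpower (cnorm x) (p - 1)) x /\ hp p y = cscale (Rpower (cnorm x) (p - 1)) y.
Proof.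
  intros E Hy. assert (Hx : x <> c0).
  { intro H; subst. rewrite cnorm_c0 in E. apply Hy, cnorm_eq0; auto. }
  rewrite !hp_nz by auto. rewrite E. auto.
Qed.

Lemma hmorph_HTC p : 0 <= p <= 1 -> hmorph HTC HTC (hp p).
Proof.
  intro Hp. unfold hmorph; simpl.
  refine (conj (hp_mul p) (conj (hp_c0 p) (conj (hp_c1 p) (conj (fun x _ H => hp_eq0 p x H) (conj _ (conj _ _)))))).
  - auto.
  - intros x _; apply hp_neg.
  - intros x y z _ _ Hadd.
    assert (Hmono : forall u v, cnorm u <= cnorm v -> cnorm (hp p u) <= cnorm (hp p v))
      by (intros u v H; rewrite !cnorm_hp_gf; apply gf_mono; [lra|split; [apply cnorm_ge0|auto]]).
    assert (Hnz : forall u v, cnorm u > cnorm v -> hp p u <> c0).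
    { intros u v H E. apply hp_eq0 in E. subst. rewrite cnorm_c0 in H. generalize (cnorm_ge0 v); lra. }
    destruct Hadd as [(H & ->)|[(H & ->)|[(H & Hz)|(H & Hne & s & t & Hs & Ht & Hst & Ez)]]].
    + assert (Hge : cnorm (hp p x) >= cnorm (hp p y)) by (apply Rle_ge, Hmono; lra).
      destruct Hge as [Hgt|Heq]; [left; auto|].
      destruct (Ceq_dec (hp p y) (cneg (hp p x))) as [E|E].
      * right; right; left. split; auto. lra.
      * right; right; right. split; auto. split; auto. apply on_arc_self. eapply Hnz; eauto.
    + assert (Hge : cnorm (hp p y) >= cnorm (hp p x)) by (apply Rle_ge, Hmono; lra).
      destruct Hge as [Hgt|Heq]; [right; left; auto|].
      destruct (Ceq_dec (hp p y) (cneg (hp p x))) as [E|E].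
      * right; right; left. split; auto. lra.
      * right; right; right. split; [lra|]. split; auto. apply on_arc_other; [eapply Hnz; eauto|lra].
    + right; right; left. rewrite H, hp_neg. split; [auto|apply Hmono; auto].
    + right; right; right.
      assert (Hy : y <> c0).
      { intro E; subst. rewrite cnorm_c0 in H. apply cnorm_eq0 in H. subst. apply Hne. symmetry; apply cneg_c0. }
      assert (Hx : x <> c0).
      { intro E; subst. rewrite cnorm_c0 in H. apply Hy, cnorm_eq0; auto. }
      destruct (hp_same_norm p x y H Hy) as (Ex & Ey).
      set (c := Rpower (cnorm x) (p - 1)) in *. assert (Hc : 0 < c) by apply Rpower_pos.
      rewrite Ex, Ey. split; [rewrite !cnorm_scale by lra; rewrite H; auto|split].
      * intro E. apply Hne. rewrite <- cscale_neg in E.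
        replace y with (cscale (/ c) (cscale c y)) by (rewrite cscale_cscale, Rinv_l by lra; apply cscale_1).
        rewrite E, cscale_cscale, Rinv_l by lra. apply cscale_1.
      * exists s, t. split; [auto|split; [auto|split; [auto|]]].
        replace (cadd (cscale s (cscale c x)) (cscale t (cscale c y))) with
          (cscale c (cadd (cscale s x) (cscale t y))) by (apply Ceq; unfold cadd, cscale; simpl; ring).
        rewrite ph_scale by auto. rewrite cnorm_scale by lra. rewrite <- cscale_cscale.
        set (w := cadd (cscale s x) (cscale t y)) in *.
        destruct (Ceq_dec (ph w) c0) as [Ew|Ew].
        -- rewrite Ez, Ew, !cscale_c0, hp_c0. auto.
        -- assert (Hw : w <> c0) by (intro E; apply Ew; rewrite E; apply ph_c0).
           assert (Hz : z <> c0) by (rewrite Ez; apply cscale_eq0; auto; apply Rgt_not_eq, cnorm_pos; auto).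
           rewrite hp_nz by auto.
           assert (Nz : cnorm z = cnorm x) by
             (rewrite Ez, cnorm_scale, cnorm_ph by (auto; apply cnorm_ge0); ring).
           rewrite Nz. fold c. rewrite Ez. auto.
Qed.

Ltac rab := rewrite ?Rabs_Ropp, ?Rabs_R1, ?Rabs_R0.

Lemma emb_K_tri : hmorph HK Htri (fun z => z).
Proof.
  unfold hmorph; simpl.
  refine (conj (fun a b => eq_refl) (conj eq_refl (conj eq_refl (conj (fun x _ H => H) (conj _ (conj _ _)))))).
  - intros x [->| ->]; split; simpl; lra.
  - auto.
  - intros x y z [->| ->] [->| ->] [(E & ->)|[(E & ->)|(E1 & E2 & [->| ->])]];
      unfold c0, c1 in *; simpl; repeat split; simpl; try lra;
      try (apply Rabs_le; lra); try (injection E; lra); try (injection E1; lra); try (injection E2; lra).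
Qed.

Lemma Rmax_01 : Rmax 0 1 = 1.
Proof. apply Rmax_right; lra. Qed.
Lemma Rmax_10 : Rmax 1 0 = 1.
Proof. apply Rmax_left; lra. Qed.

Lemma emb_K_Ttri : hmorph HK HTtri (fun z => z).
Proof.
  unfold hmorph; simpl.
  refine (conj (fun a b => eq_refl) (conj eq_refl (conj eq_refl (conj (fun x _ H => H) (conj _ (conj _ _)))))).
  - intros x [->| ->]; split; simpl; lra.
  - auto.
  - intros x y z [->| ->] [->| ->] [(E & ->)|[(E & ->)|(E1 & E2 & [->| ->])]];
      unfold c0, c1 in *; simpl;
      try (injection E; lra); try (injection E1; lra); try (injection E2; lra).
    all: first [ right; split; [reflexivity|split; [split; simpl; lra|simpl; lra]]
               | left; split; [lra|rewrite ?Rmax_01, ?Rmax_10; reflexivity] ].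
Qed.

Lemma emb_S_TR : hmorph HS HTR (fun z => z).
Proof.
  unfold hmorph; simpl. unfold S_dom.
  refine (conj (fun a b => eq_refl) (conj eq_refl (conj eq_refl (conj (fun x _ H => H) (conj _ (conj _ _)))))).
  - intros x [->|[->| ->]]; simpl; lra.
  - auto.
  - intros x y z Hx Hy [(E & ->)|[(E & ->)|[(Hnx & -> & ->)|(Hnx & -> & Hz)]]].
    + subst. destruct Hy as [->|[->| ->]].
      * right; right; left; auto.
      * right; left; split; auto. unfold c0, c1; simpl; rab; lra.
      * right; left; split; auto. unfold c0, c1, cneg; simpl; rab; lra.
    + subst. destruct Hx as [->|[->| ->]].
      * right; right; left; auto.
      * left; split; auto. unfold c0, c1; simpl; rab; lra.
      * left; split; auto. unfold c0, c1, cneg; simpl; rab; lra.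
    + right; right; left; auto.
    + right; right; right. split; auto.
      destruct Hx as [->|[->| ->]]; [contradiction| |];
      destruct Hz as [->|[->| ->]]; unfold c0, c1, cneg; simpl; rab; split; lra.
Qed.

Lemma emb_Phi_TC : hmorph HPhi HTC (fun z => z).
Proof.
  unfold hmorph; simpl. unfold Phi_dom.
  refine (conj (fun a b => eq_refl) (conj eq_refl (conj eq_refl (conj (fun x _ H => H) (conj _ (conj _ _)))))).
  - auto.
  - auto.
  - intros x y z Hx Hy [(E & ->)|[(E & ->)|[(Hnx & -> & Hz)|(Hnx & Hny & Hne & Harc)]]].
    + subst. destruct Hy as [->|Hy].
      * right; right; left. rewrite cneg_c0; split; auto. lra.
      * right; left; split; auto. rewrite Hy, cnorm_c0; lra.
    + subst. destruct Hx as [->|Hx].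
      * right; right; left. rewrite cneg_c0; split; auto. lra.
      * left; split; auto. rewrite Hx, cnorm_c0; lra.
    + right; right; left. split; auto. destruct Hx as [->|Hx]; [contradiction|].
      rewrite Hx. destruct Hz as [->|Hz]; [rewrite cnorm_c0|]; lra.
    + right; right; right. destruct Hx as [->|Hx]; [contradiction|].
      destruct Hy as [->|Hy]; [contradiction|]. split; [lra|split; auto].
Qed.

Lemma strong_weak F n r phi : GP F Strong n r phi -> matroid_support n r phi -> GP F Weak n r phi.
Proof. simpl. intros (H1 & H2 & H3) H4. split; [auto|split; [auto|split; [auto|]]].
  intros i j Hi Hj _. apply H3; auto. Qed.

Open Scope nat_scope.
Lemma swap_length m l : length (swap_at 0 m l) = length l.
Proof. unfold swap_at. rewrite length_map, length_seq. auto. Qed.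

Lemma swap_in m l z : (m < length l)%nat -> In z (swap_at 0 m l) <-> In z l.
Proof.
  intro Hm. unfold swap_at. rewrite in_map_iff. split.
  - intros (k & <- & Hk). apply in_seq in Hk.
    destruct (Nat.eqb k 0); [apply nth_In; lia|].
    destruct (Nat.eqb k m); apply nth_In; lia.
  - intro Hz. destruct (In_nth l z 0 Hz) as (k & Hk & <-).
    destruct (Nat.eq_dec k 0) as [->|Hk0].
    + destruct (Nat.eq_dec m 0) as [->|Hm0].
      * exists 0%nat. split; [simpl; auto|apply in_seq; lia].
      * exists m. split; [|apply in_seq; lia].
        destruct (Nat.eqb_spec m 0); [lia|]. rewrite Nat.eqb_refl. auto.
    + destruct (Nat.eq_dec k m) as [->|Hkm].
      * exists 0%nat. split; [simpl; auto|apply in_seq; lia].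
      * exists k. split; [|apply in_seq; lia].
        destruct (Nat.eqb_spec k 0); [lia|]. destruct (Nat.eqb_spec k m); [lia|]. auto.
Qed.

Lemma swap_hd m l : (0 < length l)%nat -> nth 0 (swap_at 0 m l) 0%nat = nth m l 0%nat.
Proof. intro H. unfold swap_at. destruct l as [|a l]; simpl in *; [lia|]. auto. Qed.

Open Scope R_scope.
Lemma iter_id m (z : C) : Nat.iter m (fun z => z) z = z.
Proof. induction m; simpl; auto. Qed.

Lemma K_sum_zero l y : Forall (fun t => t = c0) l -> hsum HK l y -> y = c0.
Proof.
  revert y; induction l as [|a l IH]; simpl; intros y Hl Hs; auto.
  destruct Hs as (w & Hw & Ha). inversion Hl; subst.
  assert (w = c0) by (apply IH; auto). subst.
  destruct Ha as [(_ & ->)|[(_ & ->)|(E & _)]]; auto.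
  exfalso; apply c1_neq0; symmetry; auto.
Qed.

Lemma K_sum_one l : Forall (hdom HK) l -> hsum HK (c1 :: l) c0 -> exists t, In t l /\ t <> c0.
Proof.
  intros Hd Hs. destruct (Forall_dec (fun t => t = c0) (fun t => Ceq_dec t c0) l) as [Hall|Hn].
  - exfalso. destruct Hs as (w & Hw & Ha). assert (w = c0) by (eapply K_sum_zero; eauto). subst.
    destruct Ha as [(E & _)|[(_ & E)|(_ & E & _)]]; apply c1_neq0; auto.
  - apply neg_Forall_Exists_neg in Hn; [|intro t; apply Ceq_dec]. apply Exists_exists in Hn. auto.
Qed.

Lemma K_matroid n r psi : GP HK Strong n r psi -> matroid_support n r psi.
Proof.
  intros HG. pose proof HG as (HAd & (Hal1 & Hal2) & HGP).
  assert (Hd : forall l, hdom HK (psi l)) by apply HAd.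
  intros l1 l2 Hl1 Hl2 H1 H2 x Hx1 Hx2.
  destruct Hl1 as (Hlen1 & Hf1). destruct Hl2 as (Hlen2 & Hf2).
  destruct (In_nth l1 x 0%nat Hx1) as (m & Hm & Hmx).
  assert (Hl1' : exists l1', valid n r l1' /\ psi l1' <> c0 /\ nth 0 l1' 0%nat = x /\
                   forall z, In z l1' <-> In z l1).
  { destruct (Nat.eq_dec m 0) as [->|Hm0].
    - exists l1. split; [split; auto|split; [auto|split; [auto|tauto]]].
    - exists (swap_at 0 m l1).
      assert (Hv : valid n r (swap_at 0 m l1)).
      { split. rewrite swap_length; auto. apply Forall_forall. intros z Hz.
        apply swap_in in Hz; auto. rewrite Forall_forall in Hf1; auto. }
      split; [auto|split; [|split]].
      + rewrite Hal2; simpl; auto; [split; auto|lia|lia].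
      + rewrite swap_hd; auto; lia.
      + intro z; apply swap_in; auto. }
  destruct Hl1' as (l1' & Hv1' & H1' & Hhd & Hin1').
  assert (Hnd1' : NoDup l1').
  { destruct (ListDec.NoDup_dec Nat.eq_dec l1') as [N|N]; auto. exfalso; apply H1', Hal1; auto. }
  destruct l1' as [|x' j]. { destruct Hv1' as (Hl & _). simpl in Hl. lia. }
  simpl in Hhd. subst x'.
  apply NoDup_cons_iff in Hnd1'. destruct Hnd1' as (Hxj & Hndj).
  assert (Hj : forall z, In z j <-> In z l1 /\ z <> x).
  { intro z; split.
    - intro Hz. split; [apply Hin1'; simpl; auto|intro E; subst; contradiction].
    - intros (Hz & Hne). apply Hin1' in Hz. destruct Hz; [congruence|auto]. }
  destruct Hv1' as (Hlenj & Hfj). simpl in Hlenj. apply Forall_cons_iff in Hfj. destruct Hfj as (Hxn & Hfj).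
  assert (Hvi : valid n (S r) (x :: l2)).
  { split; simpl; [lia|]. constructor; auto. }
  assert (Hvj' : valid n (r - 1) j) by (split; auto; lia).
  specialize (HGP (x :: l2) j Hvi Hvj').
  assert (Hdom := gp_terms_dom HK r psi (x :: l2) j hwf_HK Hd).
  set (f := fun k => cmul (Nat.iter (S k) (hneg HK) c1)
                     (cmul (psi (remove_at k (x :: l2))) (psi (nth k (x :: l2) 0%nat :: j)))).
  assert (Heq : gp_terms HK r psi (x :: l2) j = f 0%nat :: map f (seq 1 r)) by reflexivity.
  rewrite Heq in HGP, Hdom.
  assert (E0 : f 0%nat = c1).
  { change (cmul c1 (cmul (psi l2) (psi (x :: j))) = c1). rewrite cmul_c1. destruct (Hd l2) as [E|E]; [contradiction|].
    destruct (Hd (x :: j)) as [E'|E']; [contradiction|]. rewrite E, E'. apply cmul_c1. }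
  rewrite E0 in HGP. inversion Hdom as [|? ? _ Hdom']; subst.
  destruct (K_sum_one _ Hdom' HGP) as (t & Ht & Htn).
  apply in_map_iff in Ht. destruct Ht as (k & <- & Hk). apply in_seq in Hk.
  destruct k as [|k]; [lia|].
  unfold f in Htn. simpl nth in Htn.
  set (y := nth k l2 0%nat) in *.
  assert (Hy3 : psi (y :: j) <> c0).
  { intro E. apply Htn. rewrite E. rewrite (cmul_comm _ c0), cmul_c0. apply cmul_r_c0. }
  assert (Hyl2 : In y l2) by (apply nth_In; lia).
  assert (Hnd3 : NoDup (y :: j)).
  { destruct (ListDec.NoDup_dec Nat.eq_dec (y :: j)) as [N|N]; auto. exfalso; apply Hy3, Hal1; auto.
    split; simpl; [lia|]. constructor; auto. rewrite Forall_forall in Hf2; auto. }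
  inversion Hnd3 as [|? ? Hyj _]; subst.
  exists y. split; [auto|split].
  - intro Hyl1. apply Hyj. apply Hj. split; auto. intro E. apply Hx2. rewrite <- E. exact Hyl2.
  - exists (y :: j). split; [|split; auto].
    + split; simpl; [lia|]. constructor; auto. rewrite Forall_forall in Hf2; auto.
    + intro z. simpl. rewrite Hj. split.
      * intros [E|E]; [right; auto|left; auto].
      * intros [E|E]; [right; auto|left; auto].
Qed.


Lemma toK_c0' z : toK z = c0 -> z = c0.
Proof. unfold toK. destruct (Ceq_dec z c0); auto. intro H; exfalso; apply c1_neq0; auto. Qed.

Lemma toK_c0 : toK c0 = c0.
Proof. unfold toK. destruct (Ceq_dec c0 c0); congruence. Qed.

Lemma toK_idK z : hdom HK z -> toK z = z.
Proof. simpl. intros [->| ->]; [apply toK_c0|]. unfold toK. destruct (Ceq_dec c1 c0) as [E|E]; auto.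
  all: try (exfalso; apply c1_neq0; exact E). Qed.

Lemma hp0_toK z : Rnn_dom z -> hp 0 z = toK z.
Proof.
  intro Hz. destruct (Rnn_form z Hz) as (E & H). rewrite E, hp_real_nn by auto.
  unfold toK. destruct (Req_EM_T (fst z) 0) as [E0|E0].
  - rewrite E0, gf_0. fold c0. destruct (Ceq_dec c0 c0); congruence.
  - rewrite gf_p0 by lra. destruct (Ceq_dec (fst z, 0) c0) as [E1|E1].
    + exfalso. apply E0. change (fst (fst z, 0) = fst c0). rewrite E1; reflexivity.
    + reflexivity.
Qed.

Lemma ph_c0' z : ph z = c0 -> z = c0.
Proof. intro H. destruct (Ceq_dec z c0) as [E|E]; auto. exfalso.
  assert (cnorm (ph z) = 1) by (apply cnorm_ph; auto). rewrite H, cnorm_c0 in H0; lra. Qed.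

Lemma ph_norm1 z : cnorm z = 1 -> ph z = z.
Proof. intro H. assert (z <> c0) by (intro E; subst; rewrite cnorm_c0 in H; lra).
  rewrite ph_nz by auto. rewrite H, Rinv_1. apply cscale_1. Qed.

Lemma ph_idS z : hdom HS z -> ph z = z.
Proof. simpl; unfold S_dom. intros [->|[->| ->]]; [apply ph_c0| |]; apply ph_norm1.
  - apply cnorm_c1.
  - rewrite cnorm_neg; apply cnorm_c1. Qed.

Lemma ph_idPhi z : hdom HPhi z -> ph z = z.
Proof. simpl; unfold Phi_dom. intros [->|H]; [apply ph_c0|apply ph_norm1; auto]. Qed.

Theorem corollary5p4 (k : GPkind) :
  (forall (n r : nat) (M : Pt), Gr HK Strong n r M ->
     contractible (qopen Htri n r) (Real toK Htri HK k n r M) /\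
     contractible (qopen HTtri n r) (Real toK HTtri HK Strong n r M)) /\
  (forall (n r : nat) (M : Pt), Gr HS Strong n r M ->
     contractible (qopen HTR n r) (Real ph HTR HS Strong n r M)) /\
  (forall (n r : nat) (M : Pt), Gr HPhi k n r M ->
     contractible (qopen HTC n r) (Real ph HTC HPhi k n r M)).
Proof.
  split; [|split].
  - intros n r M HM. split.
    + apply (generic Htri HK toK k Strong); auto.
      * exact hwf_Htri.
      * exact hwf_HK.
      * intros z Hz. apply emb_K_tri; auto.
      * intros psi Hpsi. assert (Hs : GP Htri Strong n r psi)
          by exact (GP_transfer HK Htri (fun z => z) Strong n r psi hwf_HK emb_K_tri Hpsi).
        destruct k; auto. apply strong_weak; auto. apply K_matroid; auto.
      * exact toK_idK.
      * intros z _; apply toK_c0'.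
      * exact toK_c0.
      * exact hp0_toK.
      * exact toK_hp.
      * exact hmorph_Htri.
    + apply (generic HTtri HK toK Strong Strong); auto.
      * exact hwf_HTtri.
      * exact hwf_HK.
      * intros z Hz. apply emb_K_Ttri; auto.
      * intros psi Hpsi.
        exact (GP_transfer HK HTtri (fun z => z) Strong n r psi hwf_HK emb_K_Ttri Hpsi).
      * exact toK_idK.
      * intros z _; apply toK_c0'.
      * exact toK_c0.
      * exact hp0_toK.
      * exact toK_hp.
      * exact hmorph_HTtri.
  - intros n r M HM. apply (generic HTR HS ph Strong Strong); auto.
    + exact hwf_HTR.
    + exact hwf_HS.
    + intros z Hz. apply emb_S_TR; auto.
    + intros psi Hpsi.
      exact (GP_transfer HS HTR (fun z => z) Strong n r psi hwf_HS emb_S_TR Hpsi).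
    + exact ph_idS.
    + intros z _; apply ph_c0'.
    + exact ph_c0.
    + intros z _; apply hp_0.
    + exact ph_hp.
    + exact hmorph_HTR.
  - intros n r M HM. apply (generic HTC HPhi ph k k); auto.
    + exact hwf_HTC.
    + exact hwf_HPhi.
    + intros z Hz. apply emb_Phi_TC; auto.
    + intros psi Hpsi.
      exact (GP_transfer HPhi HTC (fun z => z) k n r psi hwf_HPhi emb_Phi_TC Hpsi).
    + exact ph_idPhi.
    + intros z _; apply ph_c0'.
    + exact ph_c0.
    + intros z _; apply hp_0.
    + exact ph_hp.
    + exact hmorph_HTC.
Qed.
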